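(* Let $m\ge 2$ and $n\ge 4$. The reduced quiver of the GL$_m$-dimer of a fan triangulation of the convex $n$-gon has exactly $$P_2(n,m-1)=\frac{(m-1)^2(n-2)+(m-1)(n-4)}{2}$$ internal vertices.
   Context: For integers $s,k$, $P_2(s,k)=\frac{k^2(s-2)+k(s-4)}{2}$ (polygonal number of second order). A fan triangulation is one whose $n-3$ diagonals all share a common polygon vertex. GL$_m$-dimer and its quiver: let $T$ be a triangulation of a convex $n$-gon $P$. Subdivide every triangle of $T$ by $m-1$ equidistant lines parallel to each of its sides into $m^2$ small triangles (upward ones, i.e. translates of the big triangle, and downward ones). Put a black node at the midpoint of each of the $m$ segments into which each side of each triangle (edge of $P$ or diagonal of $T$) is cut, a black node in every downward small triangle, and a white node in every upward small triangle. Join two nodes of different colour if they belong to the same small triangle or their small triangles share a side. The quiver has one vertex for each connected component of the complement of this graph in $P$ and, for each edge of the graph, one arrow between the two components it separates, oriented so that the white endpoint lies to its left; each white node gives an anticlockwise face and each black node of degree $\ge2$ a clockwise face. Arrows in one face are boundary arrows, in two faces internal arrows; every 2-cycle of internal arrows is removed using the relations from the natural potential (on the graph: a bivalent black node is deleted and its two white neighbours merged), giving the reduced quiver. Boundary vertices are those incident with a boundary arrow; all others are internal vertices. *)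

(* Defs.v *)
From Stdlib Require Import Reals ZArith List.
Open Scope R_scope.

Definition pt := (R * R)%type.

(* orientation determinant of (a,b,c): > 0 iff counterclockwise *)
Definition orient (a b c : pt) : R :=
  (fst b - fst a) * (snd c - snd a) - (snd b - snd a) * (fst c - fst a).

Definition convex_polygon (n : nat) (p : nat -> pt) : Prop :=
  (forall i j k, (i < j)%nat -> (j < k)%nat -> (k < n)%nat -> orient (p i) (p j) (p k) > 0) \/
  (forall i j k, (i < j)%nat -> (j < k)%nat -> (k < n)%nat -> orient (p i) (p j) (p k) < 0).

Definition in_polygon (n : nat) (p : nat -> pt) (q : pt) : Prop :=
  exists lam : nat -> R,
    (forall i, (i < n)%nat -> 0 <= lam i) /\
    sum_f_R0 lam (n - 1) = 1 /\
    fst q = sum_f_R0 (fun i => lam i * fst (p i)) (n - 1) /\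
    snd q = sum_f_R0 (fun i => lam i * snd (p i)) (n - 1).

Definition bary (A B C : pt) (x y z d : R) : pt :=
  ((x * fst A + y * fst B + z * fst C) / d,
   (x * snd A + y * snd B + z * snd C) / d).

(* The fan triangulation with apex a: its triangles are
   (p a, p (a+t), p (a+t+1)) (indices mod n), t = 1, ..., n-2, i.e. the
   n-3 diagonals are (p a, p (a+t)), t = 2, ..., n-2. *)
Definition fan_tri (n : nat) (p : nat -> pt) (a t : nat) : pt * pt * pt :=
  (p a, p ((a + t) mod n), p ((a + t + 1) mod n)).

(* Subdivision of triangle ABC into m^2 small triangles.  Lattice points are
   (i A + j B + k C)/m with i+j+k = m.  The upward small triangle (i,j,k),
   i+j+k = m-1, has corners (i+1,j,k),(i,j+1,k),(i,j,k+1); its white node is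
   placed at its centroid.  The downward small triangle (i,j,k), i+j+k = m-2,
   has corners (i+1,j+1,k),(i+1,j,k+1),(i,j+1,k+1); its black node is placed
   at its centroid. *)
Definition white_node (A B C : pt) (m i j k : nat) : pt :=
  bary A B C (3 * INR i + 1) (3 * INR j + 1) (3 * INR k + 1) (3 * INR m).
Definition down_node (A B C : pt) (m i j k : nat) : pt :=
  bary A B C (3 * INR i + 2) (3 * INR j + 2) (3 * INR k + 2) (3 * INR m).
(* black nodes at midpoints of the m segments of each side:
   side AB: segment between (i+1,j,0) and (i,j+1,0), i+j = m-1, etc. *)
Definition sideAB_node (A B C : pt) (m i j : nat) : pt :=
  bary A B C (2 * INR i + 1) (2 * INR j + 1) 0 (2 * INR m).
Definition sideAC_node (A B C : pt) (m i k : nat) : pt :=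
  bary A B C (2 * INR i + 1) 0 (2 * INR k + 1) (2 * INR m).
Definition sideBC_node (A B C : pt) (m j k : nat) : pt :=
  bary A B C 0 (2 * INR j + 1) (2 * INR k + 1) (2 * INR m).

(* Edges (white w, black b) inside one triangle:
   - the white node of the upward triangle (i,j,k) and the black node of a
     downward triangle sharing a side with it, i.e. a downward triangle
     (i',j',k') with (i,j,k) = (i',j',k') + e_l;
   - the white node of the upward triangle (i,j,k) and the side node of the
     side segment that is a side of that upward triangle (the only small
     triangle containing that segment midpoint). *)
Definition tri_edge (A B C : pt) (m : nat) (w b : pt) : Prop :=
  exists i j k, (i + j + k = m - 1)%nat /\ w = white_node A B C m i j k /\
   ((exists i' j' k', (i' + j' + k' = m - 2)%nat /\
       ((i = S i' /\ j = j' /\ k = k') \/ (i = i' /\ j = S j' /\ k = k') \/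
        (i = i' /\ j = j' /\ k = S k')) /\
       b = down_node A B C m i' j' k')
    \/ (k = 0%nat /\ b = sideAB_node A B C m i j)
    \/ (j = 0%nat /\ b = sideAC_node A B C m i k)
    \/ (i = 0%nat /\ b = sideBC_node A B C m j k)).

(* Nodes are identified with their positions in the plane, so a side node on a
   diagonal is shared by the two triangles containing that diagonal. *)
Definition dimer_edge (n : nat) (p : nat -> pt) (a m : nat) (w b : pt) : Prop :=
  exists t, (1 <= t <= n - 2)%nat /\
    let '(A, B, C) := fan_tri n p a t in tri_edge A B C m w b.

Definition on_graph n p a m (q : pt) : Prop :=
  exists w b s, dimer_edge n p a m w b /\ 0 <= s <= 1 /\
    q = (fst w + s * (fst b - fst w), snd w + s * (snd b - snd w)).

Definition region n p a m (q : pt) : Prop :=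
  in_polygon n p q /\ ~ on_graph n p a m q.

Definition conn n p a m (q1 q2 : pt) : Prop :=
  exists g : R -> pt,
    (forall t, 0 <= t <= 1 ->
       continuity_pt (fun s => fst (g s)) t /\ continuity_pt (fun s => snd (g s)) t) /\
    g 0 = q1 /\ g 1 = q2 /\
    (forall t, 0 <= t <= 1 -> region n p a m (g t)).

(* The arrow attached to the edge (w,b) crosses the edge at its midpoint
   M = (w+b)/2 in direction r = rot90(b - w), so that the white endpoint is on
   its left.  arrow_end (-1) w b q : the tail component of the arrow is the
   component of q;  arrow_end 1 w b q : the same for the head. *)
Definition arrow_end n p a m (sg : R) (w b q : pt) : Prop :=
  let Mx := (fst w + fst b) / 2 in
  let My := (snd w + snd b) / 2 in
  let rx := - (snd b - snd w) in
  let ry := fst b - fst w in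
  exists eps0, 0 < eps0 /\
    forall eps, 0 < eps < eps0 ->
      region n p a m (Mx + sg * eps * rx, My + sg * eps * ry) /\
      conn n p a m q (Mx + sg * eps * rx, My + sg * eps * ry).

(* An arrow lies in the anticlockwise face of its white node, and in the
   clockwise face of its black node iff that node has degree >= 2.  Hence the
   boundary arrows (in exactly one face) are those whose black endpoint has
   degree 1. *)
Definition boundary_arrow n p a m (w b : pt) : Prop :=
  dimer_edge n p a m w b /\ forall w', dimer_edge n p a m w' b -> w' = w.

(* Quiver vertices are components of the complement, represented by any of
   their points.  Reducing the quiver only removes (2-cycles of) internal
   arrows, so vertices and boundary arrows of the reduced quiver are those of
   the quiver. *)
Definition internal_vertex n p a m (q : pt) : Prop :=
  region n p a m q /\
  ~ (exists w b, boundary_arrow n p a m w b /\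
       (arrow_end n p a m (-1) w b q \/ arrow_end n p a m 1 w b q)).

Definition num_internal_vertices n p a m (N : Z) : Prop :=
  exists l : list pt,
    Z.of_nat (length l) = N /\
    (forall q, In q l -> internal_vertex n p a m q) /\
    (forall i j, (i < j)%nat -> (j < length l)%nat ->
        ~ conn n p a m (nth i l (0, 0)) (nth j l (0, 0))) /\
    (forall q, internal_vertex n p a m q -> exists r, In r l /\ conn n p a m q r).

Definition P2 (s k : Z) : Z := ((k * k * (s - 2) + k * (s - 4)) / 2)%Z.

(* Main.v *)
Require Import Defs.
From Stdlib Require Import Reals Lra Lia List Classical ZArith Arith ClassicalEpsilon Ranalysis5.
Import ListNotations.
Open Scope R_scope.

Definition seg (w b : pt) (s : R) : pt :=
  (fst w + s * (fst b - fst w), snd w + s * (snd b - snd w)).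
Definition bx (A B C : pt) (m : nat) (q : pt) := INR m * orient q B C / orient A B C.
Definition bY (A B C : pt) (m : nat) (q : pt) := INR m * orient A q C / orient A B C.
Definition bz (A B C : pt) (m : nat) (q : pt) := INR m * orient A B q / orient A B C.
Definition posT (A B C : pt) (m : nat) (x y z : R) : pt := bary A B C x y z (INR m).

Lemma INR_pos_m (m : nat) : (1 <= m)%nat -> INR m <> 0.
Proof. intros; apply not_0_INR; lia. Qed.

Lemma pos_bc A B C m q : orient A B C <> 0 -> (1 <= m)%nat ->
  posT A B C m (bx A B C m q) (bY A B C m q) (bz A B C m q) = q.
Proof.
  intros HD Hm. pose proof (INR_pos_m m Hm).
  destruct q as [qx qy]; destruct A as [ax ay]; destruct B as [bx0 by0]; destruct C as [cx cy].
  unfold posT, bary, bx, bY, bz, orient in *; simpl in *. f_equal; field; auto.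
Qed.

Lemma bc_pos_x A B C m x y z : orient A B C <> 0 -> (1 <= m)%nat -> x + y + z = INR m ->
  bx A B C m (posT A B C m x y z) = x.
Proof.
  intros HD Hm Hs. pose proof (INR_pos_m m Hm).
  destruct A as [ax ay]; destruct B as [bx0 by0]; destruct C as [cx cy].
  unfold posT, bary, bx, orient in *; simpl in *.
  replace (INR m) with (x+y+z) by auto. field. split; auto. rewrite Hs; auto.
Qed.
Lemma bc_pos_y A B C m x y z : orient A B C <> 0 -> (1 <= m)%nat -> x + y + z = INR m ->
  bY A B C m (posT A B C m x y z) = y.
Proof.
  intros HD Hm Hs. pose proof (INR_pos_m m Hm).
  destruct A as [ax ay]; destruct B as [bx0 by0]; destruct C as [cx cy].
  unfold posT, bary, bY, orient in *; simpl in *.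
  replace (INR m) with (x+y+z) by auto. field. split; auto. rewrite Hs; auto.
Qed.
Lemma bc_pos_z A B C m x y z : orient A B C <> 0 -> (1 <= m)%nat -> x + y + z = INR m ->
  bz A B C m (posT A B C m x y z) = z.
Proof.
  intros HD Hm Hs. pose proof (INR_pos_m m Hm).
  destruct A as [ax ay]; destruct B as [bx0 by0]; destruct C as [cx cy].
  unfold posT, bary, bz, orient in *; simpl in *.
  replace (INR m) with (x+y+z) by auto. field. split; auto. rewrite Hs; auto.
Qed.
Lemma bsum A B C m q : orient A B C <> 0 ->
  bx A B C m q + bY A B C m q + bz A B C m q = INR m.
Proof.
  intros HD. destruct q as [qx qy]; destruct A as [ax ay]; destruct B as [bx0 by0]; destruct C as [cx cy].
  unfold bx, bY, bz, orient in *; simpl in *. field; auto.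
Qed.
Lemma seg_pos A B C m x y z x' y' z' s : (1 <= m)%nat ->
  seg (posT A B C m x y z) (posT A B C m x' y' z') s =
  posT A B C m (x + s*(x'-x)) (y + s*(y'-y)) (z + s*(z'-z)).
Proof.
  intros Hm. pose proof (INR_pos_m m Hm).
  destruct A as [ax ay]; destruct B as [bx0 by0]; destruct C as [cx cy].
  unfold seg, posT, bary; simpl. f_equal; field; auto.
Qed.
Lemma white_pos A B C m i j k : (1 <= m)%nat ->
  white_node A B C m i j k = posT A B C m (INR i + /3) (INR j + /3) (INR k + /3).
Proof.
  intros Hm. pose proof (INR_pos_m m Hm).
  destruct A as [ax ay]; destruct B as [bx0 by0]; destruct C as [cx cy].
  unfold white_node, posT, bary; simpl. f_equal; field; auto.
Qed.
Lemma down_pos A B C m i j k : (1 <= m)%nat ->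
  down_node A B C m i j k = posT A B C m (INR i + 2/3) (INR j + 2/3) (INR k + 2/3).
Proof.
  intros Hm. pose proof (INR_pos_m m Hm).
  destruct A as [ax ay]; destruct B as [bx0 by0]; destruct C as [cx cy].
  unfold down_node, posT, bary; simpl. f_equal; field; auto.
Qed.
Lemma sAB_pos A B C m i j : (1 <= m)%nat ->
  sideAB_node A B C m i j = posT A B C m (INR i + /2) (INR j + /2) 0.
Proof.
  intros Hm. pose proof (INR_pos_m m Hm).
  destruct A as [ax ay]; destruct B as [bx0 by0]; destruct C as [cx cy].
  unfold sideAB_node, posT, bary; simpl. f_equal; field; auto.
Qed.
Lemma sAC_pos A B C m i k : (1 <= m)%nat ->
  sideAC_node A B C m i k = posT A B C m (INR i + /2) 0 (INR k + /2).
Proof.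
  intros Hm. pose proof (INR_pos_m m Hm).
  destruct A as [ax ay]; destruct B as [bx0 by0]; destruct C as [cx cy].
  unfold sideAC_node, posT, bary; simpl. f_equal; field; auto.
Qed.
Lemma sBC_pos A B C m j k : (1 <= m)%nat ->
  sideBC_node A B C m j k = posT A B C m 0 (INR j + /2) (INR k + /2).
Proof.
  intros Hm. pose proof (INR_pos_m m Hm).
  destruct A as [ax ay]; destruct B as [bx0 by0]; destruct C as [cx cy].
  unfold sideBC_node, posT, bary; simpl. f_equal; field; auto.
Qed.
Lemma posT_inj A B C m x y z x' y' z' : orient A B C <> 0 -> (1 <= m)%nat ->
  x + y + z = INR m -> x' + y' + z' = INR m ->
  posT A B C m x y z = posT A B C m x' y' z' -> x = x' /\ y = y' /\ z = z'.
Proof.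
  intros HD Hm H1 H2 He.
  pose proof (bc_pos_x A B C m x y z HD Hm H1) as E1.
  pose proof (bc_pos_y A B C m x y z HD Hm H1) as E2.
  pose proof (bc_pos_z A B C m x y z HD Hm H1) as E3.
  rewrite He in E1, E2, E3.
  rewrite bc_pos_x in E1; auto. rewrite bc_pos_y in E2; auto. rewrite bc_pos_z in E3; auto.
Qed.

Lemma vor_core (u v w1 w2 : R) :
  (w1 <= -1 \/ w1 = 0 \/ 1 <= w1) -> (w2 <= -1 \/ w2 = 0 \/ 1 <= w2) ->
  -1 <= u <= 1 -> -1 <= v <= 1 -> -1 <= u - v <= 1 ->
  u*w1 + v*w2 <= w1*w1 + w2*w2 + w1*w2.
Proof.
  intros H1 H2 Hu Hv Huv.
  destruct H1 as [H1|[H1|H1]]; destruct H2 as [H2|[H2|H2]]; subst; try nra.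
  - destruct (Rle_dec 0 (w1 + w2)); nra.
  - destruct (Rle_dec 0 (w1 + w2)); nra.
Qed.

Lemma vor_core_strict (u v w1 w2 : R) :
  (w1 <= -1 \/ w1 = 0 \/ 1 <= w1) -> (w2 <= -1 \/ w2 = 0 \/ 1 <= w2) ->
  ~ (w1 = 0 /\ w2 = 0) ->
  -1 < u < 1 -> -1 < v < 1 -> -1 < u - v < 1 ->
  u*w1 + v*w2 < w1*w1 + w2*w2 + w1*w2.
Proof.
  intros H1 H2 Hn Hu Hv Huv.
  destruct H1 as [H1|[H1|H1]]; destruct H2 as [H2|[H2|H2]]; subst; try nra.
  all: try (exfalso; apply Hn; auto; fail).
  all: destruct (Rle_dec 0 (w1 + w2)); nra.
Qed.

Definition SNc (m : nat) (X Y Z : R) (i j k : nat) : Prop :=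
  (i + j + k = m)%nat /\
  -1 < (X - INR i) - (Y - INR j) < 1 /\
  -1 < (X - INR i) - (Z - INR k) < 1 /\
  -1 < (Y - INR j) - (Z - INR k) < 1.
Definition WNc (m : nat) (X Y Z : R) (i j k : nat) : Prop :=
  (i + j + k = m)%nat /\
  -1 <= (X - INR i) - (Y - INR j) <= 1 /\
  -1 <= (X - INR i) - (Z - INR k) <= 1 /\
  -1 <= (Y - INR j) - (Z - INR k) <= 1.
Definition D2 (X Y Z : R) (i j k : nat) : R :=
  (X - INR i) * (X - INR i) + (Y - INR j) * (Y - INR j) + (Z - INR k) * (Z - INR k).

Lemma int_trich (z : Z) : IZR z <= -1 \/ IZR z = 0 \/ 1 <= IZR z.
Proof.
  destruct (Z.lt_ge_cases z 0) as [H|H].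
  - left. apply IZR_le. lia.
  - destruct (Z.eq_dec z 0) as [->|H'].
    + right; left; reflexivity.
    + right; right. apply IZR_le. lia.
Qed.

Lemma nat_diff_Z (a b : nat) : INR a - INR b = IZR (Z.of_nat a - Z.of_nat b).
Proof. rewrite minus_IZR, <- !INR_IZR_INZ. reflexivity. Qed.

Lemma near_le m X Y Z i j k i' j' k' :
  X + Y + Z = INR m -> (i' + j' + k' = m)%nat -> WNc m X Y Z i j k ->
  D2 X Y Z i j k <= D2 X Y Z i' j' k'.
Proof.
  intros Hs Hs' [Hsum [H1 [H2 H3]]].
  pose proof (int_trich (Z.of_nat i' - Z.of_nat i)) as T1.
  pose proof (int_trich (Z.of_nat j' - Z.of_nat j)) as T2.
  rewrite <- nat_diff_Z in T1, T2.
  assert (Hk : INR k' = INR k - (INR i' - INR i) - (INR j' - INR j)).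
  { assert (E1 : INR (i+j+k) = INR (i'+j'+k')) by (f_equal; lia).
    rewrite !plus_INR in E1. lra. }
  set (w1 := INR i' - INR i) in *. set (w2 := INR j' - INR j) in *.
  pose proof (vor_core ((X - INR i) - (Z - INR k)) ((Y - INR j) - (Z - INR k)) w1 w2 T1 T2
    ltac:(lra) ltac:(lra) ltac:(lra)) as V.
  unfold D2. rewrite Hk.
  replace (INR i') with (INR i + w1) by (unfold w1; ring).
  replace (INR j') with (INR j + w2) by (unfold w2; ring).
  nra.
Qed.

Lemma near_lt m X Y Z i j k i' j' k' :
  X + Y + Z = INR m -> (i' + j' + k' = m)%nat -> SNc m X Y Z i j k ->
  (i, j, k) <> (i', j', k') ->
  D2 X Y Z i j k < D2 X Y Z i' j' k'.
Proof.
  intros Hs Hs' [Hsum [H1 [H2 H3]]] Hne.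
  pose proof (int_trich (Z.of_nat i' - Z.of_nat i)) as T1.
  pose proof (int_trich (Z.of_nat j' - Z.of_nat j)) as T2.
  rewrite <- nat_diff_Z in T1, T2.
  assert (Hk : INR k' = INR k - (INR i' - INR i) - (INR j' - INR j)).
  { assert (E1 : INR (i+j+k) = INR (i'+j'+k')) by (f_equal; lia).
    rewrite !plus_INR in E1. lra. }
  assert (Hn : ~ (INR i' - INR i = 0 /\ INR j' - INR j = 0)).
  { intros [E1 E2]. apply Hne.
    assert (i = i') by (apply INR_eq; lra). assert (j = j') by (apply INR_eq; lra).
    subst. f_equal. lia. }
  set (w1 := INR i' - INR i) in *. set (w2 := INR j' - INR j) in *.
  pose proof (vor_core_strict ((X - INR i) - (Z - INR k)) ((Y - INR j) - (Z - INR k)) w1 w2 T1 T2 Hn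
    ltac:(lra) ltac:(lra) ltac:(lra)) as V.
  unfold D2. rewrite Hk.
  replace (INR i') with (INR i + w1) by (unfold w1; ring).
  replace (INR j') with (INR j + w2) by (unfold w2; ring).
  nra.
Qed.

Lemma SN_unique m X Y Z i j k i' j' k' :
  X + Y + Z = INR m -> SNc m X Y Z i j k -> SNc m X Y Z i' j' k' ->
  (i, j, k) = (i', j', k').
Proof.
  intros Hs H H'.
  destruct (classic ((i, j, k) = (i', j', k'))) as [E|E]; auto.
  pose proof (near_lt m X Y Z i j k i' j' k' Hs (proj1 H') H E).
  assert (E' : (i', j', k') <> (i, j, k)) by auto.
  pose proof (near_lt m X Y Z i' j' k' i j k Hs (proj1 H) H' E'). lra.
Qed.

Lemma tie_noSN m X Y Z i1 j1 k1 i2 j2 k2 i j k :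
  X + Y + Z = INR m -> (i2 + j2 + k2 = m)%nat ->
  (i1, j1, k1) <> (i2, j2, k2) ->
  WNc m X Y Z i1 j1 k1 -> D2 X Y Z i1 j1 k1 = D2 X Y Z i2 j2 k2 ->
  ~ SNc m X Y Z i j k.
Proof.
  intros Hs Hs2 Hne HW HD HS.
  destruct (classic ((i, j, k) = (i1, j1, k1))) as [E|E].
  - injection E as -> -> ->.
    pose proof (near_lt m X Y Z i1 j1 k1 i2 j2 k2 Hs Hs2 HS Hne). lra.
  - pose proof (near_lt m X Y Z i j k i1 j1 k1 Hs (proj1 HW) HS E).
    pose proof (near_le m X Y Z i1 j1 k1 i j k Hs (proj1 HS) HW). lra.
Qed.

Definition InT A B C m q := 0 <= bx A B C m q /\ 0 <= bY A B C m q /\ 0 <= bz A B C m q.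
Definition SN A B C m q i j k := SNc m (bx A B C m q) (bY A B C m q) (bz A B C m q) i j k.
Definition on_tri A B C m q := exists w b s, tri_edge A B C m w b /\ 0 <= s <= 1 /\ q = seg w b s.

Lemma INR_sum3 i j k n : (i + j + k = n)%nat -> INR i + INR j + INR k = INR n.
Proof. intros <-. rewrite !plus_INR. ring. Qed.

Ltac coords HD Hm :=
  unfold InT, SN; rewrite ?bc_pos_x, ?bc_pos_y, ?bc_pos_z by (auto; nra).

Lemma T1 A B C m w b s : orient A B C <> 0 -> (2 <= m)%nat ->
  tri_edge A B C m w b -> 0 <= s <= 1 ->
  InT A B C m (seg w b s) /\ forall i j k, ~ SN A B C m (seg w b s) i j k.
Proof.
  intros HD Hm [i [j [k [Hs [-> Hcase]]]]] Hs01.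
  assert (Hm1 : (1 <= m)%nat) by lia.
  assert (HI : INR i + INR j + INR k + 1 = INR m).
  { rewrite (INR_sum3 i j k (m-1)) by auto. rewrite minus_INR by lia. simpl. lra. }
  pose proof (pos_INR i); pose proof (pos_INR j); pose proof (pos_INR k).
  rewrite white_pos by auto.
  destruct Hcase as [[i' [j' [k' [Hs' [Hc ->]]]]] | [[-> ->] | [[-> ->] | [-> ->]]]].
  - rewrite down_pos, seg_pos by auto.
    destruct Hc as [[-> [-> ->]] | [[-> [-> ->]] | [-> [-> ->]]]]; rewrite ?S_INR in *;
      pose proof (pos_INR i'); pose proof (pos_INR j'); pose proof (pos_INR k'); coords HD Hm; (split; [repeat split; lra|]); intros i0 j0 k0.
    + apply (tie_noSN m _ _ _ (S i') (S j') k' (S i') j' (S k')); try (rewrite ?S_INR; lra);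
        try (simpl; lia); try (intro E; injection E; lia);
        [split; [lia | rewrite ?S_INR; repeat split; lra] | unfold D2; rewrite ?S_INR; ring].
    + apply (tie_noSN m _ _ _ (S i') (S j') k' i' (S j') (S k')); try (rewrite ?S_INR; lra);
        try (simpl; lia); try (intro E; injection E; lia);
        [split; [lia | rewrite ?S_INR; repeat split; lra] | unfold D2; rewrite ?S_INR; ring].
    + apply (tie_noSN m _ _ _ (S i') j' (S k') i' (S j') (S k')); try (rewrite ?S_INR; lra);
        try (simpl; lia); try (intro E; injection E; lia);
        [split; [lia | rewrite ?S_INR; repeat split; lra] | unfold D2; rewrite ?S_INR; ring].
  - rewrite sAB_pos, seg_pos by auto. simpl INR in *.
    coords HD Hm; (split; [repeat split; lra|]); intros i0 j0 k0.
    apply (tie_noSN m _ _ _ (S i) j 0 i (S j) 0); try (rewrite ?S_INR; simpl; lra);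
        try (simpl; lia); try (intro E; injection E; lia);
        [split; [lia | rewrite ?S_INR; simpl; repeat split; lra] | unfold D2; rewrite ?S_INR; simpl; ring].
  - rewrite sAC_pos, seg_pos by auto. simpl INR in *.
    coords HD Hm; (split; [repeat split; lra|]); intros i0 j0 k0.
    apply (tie_noSN m _ _ _ (S i) 0 k i 0 (S k)); try (rewrite ?S_INR; simpl; lra);
        try (simpl; lia); try (intro E; injection E; lia);
        [split; [lia | rewrite ?S_INR; simpl; repeat split; lra] | unfold D2; rewrite ?S_INR; simpl; ring].
  - rewrite sBC_pos, seg_pos by auto. simpl INR in *.
    coords HD Hm; (split; [repeat split; lra|]); intros i0 j0 k0.
    apply (tie_noSN m _ _ _ 0 (S j) k 0 j (S k)); try (rewrite ?S_INR; simpl; lra);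
        try (simpl; lia); try (intro E; injection E; lia);
        [split; [lia | rewrite ?S_INR; simpl; repeat split; lra] | unfold D2; rewrite ?S_INR; simpl; ring].
Qed.

Lemma floor_nat (X : R) : 0 <= X -> exists i : nat, INR i <= X < INR i + 1.
Proof.
  intros HX. destruct (base_Int_part X) as [H1 H2].
  assert (Hp : (0 <= Int_part X)%Z).
  { assert (IZR (-1) < IZR (Int_part X)) by lra. apply lt_IZR in H. lia. }
  exists (Z.to_nat (Int_part X)). rewrite INR_IZR_INZ, Z2Nat.id by auto. lra.
Qed.

Lemma max3_cases (a b c : R) :
  (b < a /\ c < a) \/ (a < b /\ c < b) \/ (a < c /\ b < c) \/
  (a = b /\ c <= a) \/ (a = c /\ b <= a) \/ (b = c /\ a <= b).
Proof.
  destruct (total_order_T a b) as [[H1|H1]|H1];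
  destruct (total_order_T a c) as [[H2|H2]|H2];
  destruct (total_order_T b c) as [[H3|H3]|H3]; try lra;
  tauto || (subst; lra) || idtac.
  all: first [ do 3 right; left; split; lra | do 4 right; left; split; lra | do 5 right; split; lra
             | left; split; lra | right; left; split; lra | right; right; left; split; lra ].
Qed.

Lemma min3_cases (a b c : R) :
  (a < b /\ a < c) \/ (b < a /\ b < c) \/ (c < a /\ c < b) \/
  (a = b /\ a <= c) \/ (a = c /\ a <= b) \/ (b = c /\ b <= a).
Proof.
  destruct (max3_cases (-a) (-b) (-c)) as [H|[H|[H|[H|[H|H]]]]].
  - left; lra. - right; left; lra. - right; right; left; lra.
  - do 3 right; left; lra. - do 4 right; left; lra. - do 5 right; lra.
Qed.

Ltac fin_seg Hq := rewrite <- Hq; f_equal; rewrite ?S_INR; simpl INR; nra.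

Lemma T2 A B C m q : orient A B C <> 0 -> (2 <= m)%nat -> InT A B C m q ->
  (exists i j k, SN A B C m q i j k) \/ on_tri A B C m q.
Proof.
  intros HD Hm [HX [HY HZ]].
  assert (Hm1 : (1 <= m)%nat) by lia.
  pose proof (bsum A B C m q HD) as Hs.
  pose proof (pos_bc A B C m q HD Hm1) as Hq.
  unfold SN, on_tri.
  set (X := bx A B C m q) in *. set (Y := bY A B C m q) in *. set (Z := bz A B C m q) in *.
  destruct (floor_nat X HX) as [i0 Hi0]. destruct (floor_nat Y HY) as [j0 Hj0].
  destruct (floor_nat Z HZ) as [k0 Hk0].
  pose proof (pos_INR i0); pose proof (pos_INR j0); pose proof (pos_INR k0).
  assert (HN : (i0 + j0 + k0 <= m /\ m < i0 + j0 + k0 + 3)%nat).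
  { split. apply INR_le. rewrite !plus_INR. lra. apply INR_lt. rewrite !plus_INR. simpl (INR 3). lra. }
  assert (Hc : (m = i0+j0+k0 \/ m = S (i0+j0+k0) \/ m = S (S (i0+j0+k0)))%nat) by lia.
  destruct Hc as [Hc|[Hc|Hc]]; pose proof Hc as Hc'; apply (f_equal INR) in Hc'; rewrite ?S_INR, !plus_INR in Hc'.
  - left. exists i0, j0, k0. split; [lia|]. repeat split; lra.
  - destruct (max3_cases (X - INR i0) (Y - INR j0) (Z - INR k0)) as [Hx|[Hx|[Hx|[Hx|[Hx|Hx]]]]].
    + left. exists (S i0), j0, k0. split; [lia|]. rewrite S_INR. repeat split; lra.
    + left. exists i0, (S j0), k0. split; [lia|]. rewrite S_INR. repeat split; lra.
    + left. exists i0, j0, (S k0). split; [lia|]. rewrite S_INR. repeat split; lra.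
    + right. destruct k0 as [|k'].
      * exists (white_node A B C m i0 j0 0), (sideAB_node A B C m i0 j0), (6*(X - INR i0) - 2).
        split. { exists i0, j0, 0%nat. split; [lia|]. split; [reflexivity|]. right; left. split; reflexivity. }
        simpl INR in *. split. lra.
        rewrite white_pos, sAB_pos, seg_pos by auto. fin_seg Hq.
      * exists (white_node A B C m i0 j0 (S k')), (down_node A B C m i0 j0 k'), (3*(X - INR i0) - 1).
        split. { exists i0, j0, (S k'). split; [lia|]. split; [reflexivity|]. left.
                 exists i0, j0, k'. split; [lia|]. split; [right; right; auto|reflexivity]. }
        rewrite S_INR in *. split. lra.
        rewrite white_pos, down_pos, seg_pos by auto. fin_seg Hq.
    + right. destruct j0 as [|j'].
      * exists (white_node A B C m i0 0 k0), (sideAC_node A B C m i0 k0), (6*(X - INR i0) - 2).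
        split. { exists i0, 0%nat, k0. split; [lia|]. split; [reflexivity|]. right; right; left. split; reflexivity. }
        simpl INR in *. split. lra.
        rewrite white_pos, sAC_pos, seg_pos by auto. fin_seg Hq.
      * exists (white_node A B C m i0 (S j') k0), (down_node A B C m i0 j' k0), (3*(X - INR i0) - 1).
        split. { exists i0, (S j'), k0. split; [lia|]. split; [reflexivity|]. left.
                 exists i0, j', k0. split; [lia|]. split; [right; left; auto|reflexivity]. }
        rewrite S_INR in *. split. lra.
        rewrite white_pos, down_pos, seg_pos by auto. fin_seg Hq.
    + right. destruct i0 as [|i'].
      * exists (white_node A B C m 0 j0 k0), (sideBC_node A B C m j0 k0), (6*(Y - INR j0) - 2).
        split. { exists 0%nat, j0, k0. split; [lia|]. split; [reflexivity|]. right; right; right. split; reflexivity. }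
        simpl INR in *. split. lra.
        rewrite white_pos, sBC_pos, seg_pos by auto. fin_seg Hq.
      * exists (white_node A B C m (S i') j0 k0), (down_node A B C m i' j0 k0), (3*(Y - INR j0) - 1).
        split. { exists (S i'), j0, k0. split; [lia|]. split; [reflexivity|]. left.
                 exists i', j0, k0. split; [lia|]. split; [left; auto|reflexivity]. }
        rewrite S_INR in *. split. lra.
        rewrite white_pos, down_pos, seg_pos by auto. fin_seg Hq.
  - destruct (min3_cases (X - INR i0) (Y - INR j0) (Z - INR k0)) as [Hx|[Hx|[Hx|[Hx|[Hx|Hx]]]]].
    + left. exists i0, (S j0), (S k0). split; [lia|]. rewrite !S_INR. repeat split; lra.
    + left. exists (S i0), j0, (S k0). split; [lia|]. rewrite !S_INR. repeat split; lra.
    + left. exists (S i0), (S j0), k0. split; [lia|]. rewrite !S_INR. repeat split; lra.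
    + right. exists (white_node A B C m i0 j0 (S k0)), (down_node A B C m i0 j0 k0), (3*(X - INR i0) - 1).
      split. { exists i0, j0, (S k0). split; [lia|]. split; [reflexivity|]. left.
               exists i0, j0, k0. split; [lia|]. split; [right; right; auto|reflexivity]. }
      split. lra.
      rewrite white_pos, down_pos, seg_pos by auto. fin_seg Hq.
    + right. exists (white_node A B C m i0 (S j0) k0), (down_node A B C m i0 j0 k0), (3*(X - INR i0) - 1).
      split. { exists i0, (S j0), k0. split; [lia|]. split; [reflexivity|]. left.
               exists i0, j0, k0. split; [lia|]. split; [right; left; auto|reflexivity]. }
      split. lra.
      rewrite white_pos, down_pos, seg_pos by auto. fin_seg Hq.
    + right. exists (white_node A B C m (S i0) j0 k0), (down_node A B C m i0 j0 k0), (3*(Y - INR j0) - 1).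
      split. { exists (S i0), j0, k0. split; [lia|]. split; [reflexivity|]. left.
               exists i0, j0, k0. split; [lia|]. split; [left; auto|reflexivity]. }
      split. lra.
      rewrite white_pos, down_pos, seg_pos by auto. fin_seg Hq.
Qed.

Definition Affine (f : pt -> R) := exists al be : R, forall q q',
  f q' - f q = al * (fst q' - fst q) + be * (snd q' - snd q).

Lemma aff_bx A B C m : orient A B C <> 0 -> Affine (bx A B C m).
Proof.
  intros HD. destruct A as [ax ay]; destruct B as [bx0 by0]; destruct C as [cx cy].
  exists (INR m * (by0 - cy) / orient (ax,ay) (bx0,by0) (cx,cy)),
         (INR m * (cx - bx0) / orient (ax,ay) (bx0,by0) (cx,cy)).
  intros [qx qy] [qx' qy']. unfold bx, orient in *; simpl in *. field; auto.
Qed.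
Lemma aff_bY A B C m : orient A B C <> 0 -> Affine (bY A B C m).
Proof.
  intros HD. destruct A as [ax ay]; destruct B as [bx0 by0]; destruct C as [cx cy].
  exists (INR m * (cy - ay) / orient (ax,ay) (bx0,by0) (cx,cy)),
         (INR m * (ax - cx) / orient (ax,ay) (bx0,by0) (cx,cy)).
  intros [qx qy] [qx' qy']. unfold bY, orient in *; simpl in *. field; auto.
Qed.
Lemma aff_bz A B C m : orient A B C <> 0 -> Affine (bz A B C m).
Proof.
  intros HD. destruct A as [ax ay]; destruct B as [bx0 by0]; destruct C as [cx cy].
  exists (INR m * (ay - by0) / orient (ax,ay) (bx0,by0) (cx,cy)),
         (INR m * (bx0 - ax) / orient (ax,ay) (bx0,by0) (cx,cy)).
  intros [qx qy] [qx' qy']. unfold bz, orient in *; simpl in *. field; auto.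
Qed.
Lemma aff_lin (f g : pt -> R) (a b c : R) : Affine f -> Affine g ->
  Affine (fun q => a * f q + b * g q + c).
Proof.
  intros [a1 [b1 H1]] [a2 [b2 H2]]. exists (a*a1 + b*a2), (a*b1 + b*b2).
  intros q q'. specialize (H1 q q'); specialize (H2 q q'). nra.
Qed.

Definition near (d : R) (q q' : pt) := Rabs (fst q' - fst q) < d /\ Rabs (snd q' - snd q) < d.

Lemma affine_open f q : Affine f -> 0 < f q ->
  exists d, 0 < d /\ forall q', near d q q' -> 0 < f q'.
Proof.
  intros [al [be H]] Hf.
  exists (f q / (Rabs al + Rabs be + 1)). split.
  { apply Rdiv_lt_0_compat; auto. pose proof (Rabs_pos al); pose proof (Rabs_pos be); lra. }
  intros q' [H1 H2]. specialize (H q q').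
  set (K := Rabs al + Rabs be + 1) in *.
  assert (HK : 0 < K) by (unfold K; pose proof (Rabs_pos al); pose proof (Rabs_pos be); lra).
  set (dx := fst q' - fst q) in *. set (dy := snd q' - snd q) in *.
  assert (E1 : Rabs (al * dx) <= Rabs al * (f q / K)).
  { rewrite Rabs_mult. apply Rmult_le_compat_l; [apply Rabs_pos | lra]. }
  assert (E2 : Rabs (be * dy) <= Rabs be * (f q / K)).
  { rewrite Rabs_mult. apply Rmult_le_compat_l; [apply Rabs_pos | lra]. }
  assert (E3 : (Rabs al + Rabs be) * (f q / K) < f q).
  { assert (P0 : 0 < f q / K) by (apply Rdiv_lt_0_compat; auto).
    assert (E : (Rabs al + Rabs be) * (f q / K) = f q - f q / K) by (unfold K in *; field; lra).
    lra. }
  pose proof (Rle_abs (- (al*dx))). pose proof (Rle_abs (- (be*dy))). rewrite Rabs_Ropp in *.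
  lra.
Qed.

Lemma near_mono d d' q q' : d <= d' -> near d q q' -> near d' q q'.
Proof. unfold near; intros; lra. Qed.

Lemma open_and (P Q : pt -> Prop) q :
  (exists d, 0 < d /\ forall q', near d q q' -> P q') ->
  (exists d, 0 < d /\ forall q', near d q q' -> Q q') ->
  (exists d, 0 < d /\ forall q', near d q q' -> P q' /\ Q q').
Proof.
  intros [d1 [H1 P1]] [d2 [H2 P2]]. exists (Rmin d1 d2). split.
  { apply Rmin_pos; auto. }
  intros q' Hn. split.
  - apply P1. eapply near_mono; [apply Rmin_l|eauto].
  - apply P2. eapply near_mono; [apply Rmin_r|eauto].
Qed.

Lemma open_lt1 f q : Affine f -> f q < 1 -> exists d, 0 < d /\ forall q', near d q q' -> f q' < 1.
Proof.
  intros Ha Hf. destruct (affine_open (fun q => (-1) * f q + 0 * f q + 1) q) as [d [Hd P]].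
  - apply aff_lin; auto.
  - lra.
  - exists d; split; auto. intros q' Hn. specialize (P q' Hn). lra.
Qed.
Lemma open_gtm1 f q : Affine f -> -1 < f q -> exists d, 0 < d /\ forall q', near d q q' -> -1 < f q'.
Proof.
  intros Ha Hf. destruct (affine_open (fun q => 1 * f q + 0 * f q + 1) q) as [d [Hd P]].
  - apply aff_lin; auto.
  - lra.
  - exists d; split; auto. intros q' Hn. specialize (P q' Hn). lra.
Qed.
Lemma open_neg f q : Affine f -> f q < 0 -> exists d, 0 < d /\ forall q', near d q q' -> f q' < 0.
Proof.
  intros Ha Hf. destruct (affine_open (fun q => (-1) * f q + 0 * f q + 0) q) as [d [Hd P]].
  - apply aff_lin; auto.
  - lra.
  - exists d; split; auto. intros q' Hn. specialize (P q' Hn). lra.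
Qed.

Lemma SN_open A B C m q i j k : orient A B C <> 0 -> SN A B C m q i j k ->
  exists d, 0 < d /\ forall q', near d q q' -> SN A B C m q' i j k.
Proof.
  intros HD [Hs [[H1 H2] [[H3 H4] [H5 H6]]]].
  pose proof (aff_bx A B C m HD) as ax. pose proof (aff_bY A B C m HD) as ay.
  pose proof (aff_bz A B C m HD) as az.
  set (f1 := fun q => 1 * bx A B C m q + (-1) * bY A B C m q + (INR j - INR i)).
  set (f2 := fun q => 1 * bx A B C m q + (-1) * bz A B C m q + (INR k - INR i)).
  set (f3 := fun q => 1 * bY A B C m q + (-1) * bz A B C m q + (INR k - INR j)).
  assert (A1 : Affine f1) by (apply aff_lin; auto).
  assert (A2 : Affine f2) by (apply aff_lin; auto).
  assert (A3 : Affine f3) by (apply aff_lin; auto).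
  destruct (open_and _ _ q (open_gtm1 f1 q A1 ltac:(unfold f1; lra)) (open_lt1 f1 q A1 ltac:(unfold f1; lra))) as [d1 [Hd1 P1]].
  destruct (open_and _ _ q (open_gtm1 f2 q A2 ltac:(unfold f2; lra)) (open_lt1 f2 q A2 ltac:(unfold f2; lra))) as [d2 [Hd2 P2]].
  destruct (open_and _ _ q (open_gtm1 f3 q A3 ltac:(unfold f3; lra)) (open_lt1 f3 q A3 ltac:(unfold f3; lra))) as [d3 [Hd3 P3]].
  exists (Rmin d1 (Rmin d2 d3)). split. { repeat apply Rmin_pos; auto. }
  intros q' Hn. 
  assert (N1 : near d1 q q') by (apply (near_mono (Rmin d1 (Rmin d2 d3))); auto; apply Rmin_l).
  assert (N2 : near d2 q q') by (apply (near_mono (Rmin d1 (Rmin d2 d3))); auto; eapply Rle_trans; [apply Rmin_r|apply Rmin_l]).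
  assert (N3 : near d3 q q') by (apply (near_mono (Rmin d1 (Rmin d2 d3))); auto; eapply Rle_trans; [apply Rmin_r|apply Rmin_r]).
  destruct (P1 q' N1); destruct (P2 q' N2); destruct (P3 q' N3). unfold f1, f2, f3 in *.
  split; auto. repeat split; lra.
Qed.

Lemma tri_open A B C m q i j k : orient A B C <> 0 ->
  (InT A B C m q -> SN A B C m q i j k) ->
  exists d, 0 < d /\ forall q', near d q q' -> InT A B C m q' -> SN A B C m q' i j k.
Proof.
  intros HD H.
  destruct (classic (InT A B C m q)) as [Hin|Hout].
  - destruct (SN_open A B C m q i j k HD (H Hin)) as [d [Hd P]]. exists d; split; auto.
  - unfold InT in Hout.
    destruct (Rlt_le_dec (bx A B C m q) 0) as [N|N].
    { destruct (open_neg _ q (aff_bx A B C m HD) N) as [d [Hd P]]. exists d; split; auto.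
      intros q' Hn [Hi _]. specialize (P q' Hn). lra. }
    destruct (Rlt_le_dec (bY A B C m q) 0) as [N'|N'].
    { destruct (open_neg _ q (aff_bY A B C m HD) N') as [d [Hd P]]. exists d; split; auto.
      intros q' Hn [_ [Hi _]]. specialize (P q' Hn). lra. }
    destruct (Rlt_le_dec (bz A B C m q) 0) as [N''|N''].
    { destruct (open_neg _ q (aff_bz A B C m HD) N'') as [d [Hd P]]. exists d; split; auto.
      intros q' Hn [_ [_ Hi]]. specialize (P q' Hn). lra. }
    exfalso; apply Hout; auto.
Qed.

Lemma bx_seg A B C m q1 q2 s : orient A B C <> 0 ->
  bx A B C m (seg q1 q2 s) = bx A B C m q1 + s * (bx A B C m q2 - bx A B C m q1).
Proof.
  intros HD. destruct A as [ax ay]; destruct B as [bx0 by0]; destruct C as [cx cy].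
  destruct q1 as [x1 y1]; destruct q2 as [x2 y2].
  unfold seg, bx, orient in *; simpl in *. field; auto.
Qed.
Lemma bY_seg A B C m q1 q2 s : orient A B C <> 0 ->
  bY A B C m (seg q1 q2 s) = bY A B C m q1 + s * (bY A B C m q2 - bY A B C m q1).
Proof.
  intros HD. destruct A as [ax ay]; destruct B as [bx0 by0]; destruct C as [cx cy].
  destruct q1 as [x1 y1]; destruct q2 as [x2 y2].
  unfold seg, bY, orient in *; simpl in *. field; auto.
Qed.
Lemma bz_seg A B C m q1 q2 s : orient A B C <> 0 ->
  bz A B C m (seg q1 q2 s) = bz A B C m q1 + s * (bz A B C m q2 - bz A B C m q1).
Proof.
  intros HD. destruct A as [ax ay]; destruct B as [bx0 by0]; destruct C as [cx cy].
  destruct q1 as [x1 y1]; destruct q2 as [x2 y2].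
  unfold seg, bz, orient in *; simpl in *. field; auto.
Qed.

Lemma InT_seg A B C m q1 q2 s : orient A B C <> 0 -> 0 <= s <= 1 ->
  InT A B C m q1 -> InT A B C m q2 -> InT A B C m (seg q1 q2 s).
Proof.
  intros HD Hs [H1 [H2 H3]] [H1' [H2' H3']]. unfold InT.
  rewrite bx_seg, bY_seg, bz_seg by auto.
  assert (Hs1 : 0 <= 1 - s) by lra.
  pose proof (Rmult_le_pos _ _ (proj1 Hs) H1'); pose proof (Rmult_le_pos _ _ Hs1 H1).
  pose proof (Rmult_le_pos _ _ (proj1 Hs) H2'); pose proof (Rmult_le_pos _ _ Hs1 H2).
  pose proof (Rmult_le_pos _ _ (proj1 Hs) H3'); pose proof (Rmult_le_pos _ _ Hs1 H3).
  repeat split; lra.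
Qed.
Lemma conv a b s : 0 <= s <= 1 -> -1 < a < 1 -> -1 < b < 1 -> -1 < a + s*(b-a) < 1.
Proof.
  intros Hs [Ha Ha'] [Hb Hb'].
  assert (0 <= 1 - s) by lra.
  pose proof (Rmult_le_pos s (1 - b) (proj1 Hs) ltac:(lra)).
  pose proof (Rmult_le_pos (1 - s) (1 - a) ltac:(lra) ltac:(lra)).
  pose proof (Rmult_le_pos s (b + 1) (proj1 Hs) ltac:(lra)).
  pose proof (Rmult_le_pos (1 - s) (a + 1) ltac:(lra) ltac:(lra)).
  split; nra.
Qed.

Lemma SN_seg A B C m q1 q2 s i j k : orient A B C <> 0 -> 0 <= s <= 1 ->
  SN A B C m q1 i j k -> SN A B C m q2 i j k -> SN A B C m (seg q1 q2 s) i j k.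
Proof.
  intros HD Hs [Hsum [[H1 H2] [[H3 H4] [H5 H6]]]] [_ [[H1' H2'] [[H3' H4'] [H5' H6']]]].
  unfold SN, SNc. rewrite bx_seg, bY_seg, bz_seg by auto. split; auto.
  set (x1 := bx A B C m q1) in *. set (x2 := bx A B C m q2) in *.
  set (y1 := bY A B C m q1) in *. set (y2 := bY A B C m q2) in *.
  set (z1 := bz A B C m q1) in *. set (z2 := bz A B C m q2) in *.
  pose proof (conv (x1 - INR i - (y1 - INR j)) (x2 - INR i - (y2 - INR j)) s Hs (conj H1 H2) (conj H1' H2')).
  pose proof (conv (x1 - INR i - (z1 - INR k)) (x2 - INR i - (z2 - INR k)) s Hs (conj H3 H4) (conj H3' H4')).
  pose proof (conv (y1 - INR j - (z1 - INR k)) (y2 - INR j - (z2 - INR k)) s Hs (conj H5 H6) (conj H5' H6')).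
  repeat split; lra.
Qed.

Definition Xeps (w b : pt) (sg eps : R) : pt :=
  ((fst w + fst b) / 2 + sg * eps * (- (snd b - snd w)),
   (snd w + snd b) / 2 + sg * eps * (fst b - fst w)).

Lemma kappa_nz (u v dx dy : R) : u * dx + v * dy = 0 -> ~ (dx = 0 /\ dy = 0) -> ~ (u = 0 /\ v = 0) ->
  u * (- dy) + v * dx <> 0.
Proof.
  intros H1 H2 H3 H4.
  assert (E1 : (u*u + v*v) * dx = 0).
  { replace ((u*u + v*v) * dx) with (u*(u*dx+v*dy) + v*(u*(-dy)+v*dx)) by ring. rewrite H1, H4. ring. }
  assert (E2 : (u*u + v*v) * dy = 0).
  { replace ((u*u + v*v) * dy) with (v*(u*dx+v*dy) - u*(u*(-dy)+v*dx)) by ring. rewrite H1, H4. ring. }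
  destruct (Req_dec (u*u+v*v) 0) as [E|E].
  - apply H3. split; nra.
  - apply H2. split; [apply (Rmult_eq_reg_l (u*u+v*v)); lra | apply (Rmult_eq_reg_l (u*u+v*v)); lra].
Qed.

Lemma bx_A A B C m : orient A B C <> 0 -> bx A B C m A = INR m.
Proof. intros. unfold bx. field; auto. Qed.
Lemma bY_A A B C m : orient A B C <> 0 -> bY A B C m A = 0.
Proof. intros. unfold bY. replace (orient A A C) with 0 by (unfold orient; ring). unfold Rdiv; ring. Qed.
Lemma bx_B A B C m : orient A B C <> 0 -> bx A B C m B = 0.
Proof. intros. unfold bx. replace (orient B B C) with 0 by (unfold orient; ring). unfold Rdiv; ring. Qed.
Lemma bY_B A B C m : orient A B C <> 0 -> bY A B C m B = INR m.
Proof. intros. unfold bY. field; auto. Qed.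

Lemma Xeps_aff (f : pt -> R) al be w b sg eps :
  (forall q q', f q' - f q = al * (fst q' - fst q) + be * (snd q' - snd q)) ->
  f (Xeps w b sg eps) = f w + (f b - f w) / 2 + sg * eps * (al * (- (snd b - snd w)) + be * (fst b - fst w)).
Proof.
  intros H. pose proof (H w (Xeps w b sg eps)) as H1. pose proof (H w b) as H2.
  unfold Xeps in *; simpl in *. lra.
Qed.

Lemma arrowAB A B C m i j : orient A B C <> 0 -> (2 <= m)%nat -> (i + j = m - 1)%nat ->
  exists kap, kap <> 0 /\ forall sg, (sg = 1 \/ sg = -1) -> exists eps0, 0 < eps0 /\
    forall eps, 0 < eps < eps0 ->
      let X := Xeps (white_node A B C m i j 0) (sideAB_node A B C m i j) sg eps in
      InT A B C m X /\ (sg * kap > 0 -> SN A B C m X (S i) j 0) /\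
      (sg * kap < 0 -> SN A B C m X i (S j) 0).
Proof.
  intros HD Hm Hij.
  assert (Hm1 : (1 <= m)%nat) by lia.
  assert (HI : INR i + INR j + 1 = INR m).
  { assert (INR (i + j) = INR (m - 1)) by (f_equal; auto).
    rewrite plus_INR, minus_INR in H by lia. simpl in H. lra. }
  set (w := white_node A B C m i j 0). set (b := sideAB_node A B C m i j).
  destruct (aff_bx A B C m HD) as [ax [bx0 Hx]].
  destruct (aff_bY A B C m HD) as [ay [by0 Hy]].
  destruct (aff_bz A B C m HD) as [az [bz0 Hz]].
  assert (Ww : bx A B C m w = INR i + /3 /\ bY A B C m w = INR j + /3 /\ bz A B C m w = /3).
  { unfold w. rewrite white_pos by auto. simpl INR.
    rewrite bc_pos_x, bc_pos_y, bc_pos_z; auto; lra. }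
  assert (Wb : bx A B C m b = INR i + /2 /\ bY A B C m b = INR j + /2 /\ bz A B C m b = 0).
  { unfold b. rewrite sAB_pos by auto.
    rewrite bc_pos_x, bc_pos_y, bc_pos_z; auto; lra. }
  set (rx := - (snd b - snd w)). set (ry := fst b - fst w).
  set (kx := ax * rx + bx0 * ry). set (ky := ay * rx + by0 * ry). set (kz := az * rx + bz0 * ry).
  exists (kx - ky). split.
  { unfold kx, ky, rx, ry.
    replace ((ax * - (snd b - snd w) + bx0 * (fst b - fst w)) - (ay * - (snd b - snd w) + by0 * (fst b - fst w)))
      with ((ax - ay) * - (snd b - snd w) + (bx0 - by0) * (fst b - fst w)) by ring.
    apply kappa_nz.
    - pose proof (Hx w b); pose proof (Hy w b). lra.
    - intros [E1 E2]. assert (w = b).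
      { destruct w, b; simpl in *. f_equal; lra. }
      rewrite H in Ww. lra.
    - intros [E1 E2]. pose proof (Hx A B) as G1; pose proof (Hy A B) as G2.
      rewrite (bx_A A B C m HD), (bx_B A B C m HD) in G1. rewrite (bY_A A B C m HD), (bY_B A B C m HD) in G2.
      assert (ax = ay) by lra. assert (bx0 = by0) by lra. subst ay by0.
      pose proof (lt_0_INR m ltac:(lia)). lra. }
  intros sg Hsg.
  set (K := Rabs kx + Rabs ky + Rabs kz + 1).
  assert (HK : 0 < K) by (unfold K; pose proof (Rabs_pos kx); pose proof (Rabs_pos ky); pose proof (Rabs_pos kz); lra).
  exists (/ (12 * K)). split. { apply Rinv_0_lt_compat. lra. }
  intros eps [He1 He2] X.
  assert (Heps : eps * K < /12).
  { assert (eps * (12 * K) < 1).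
    { apply (Rmult_lt_reg_r (/ (12 * K))). apply Rinv_0_lt_compat; lra.
      rewrite Rmult_assoc, Rinv_r by lra. lra. }
    lra. }
  assert (Hsmall : forall k, Rabs k <= K -> -/12 < sg * eps * k < /12).
  { intros k Hk. assert (Rabs (sg * eps * k) < /12).
    { rewrite !Rabs_mult. assert (Rabs sg = 1) by (destruct Hsg; subst; unfold Rabs; destruct Rcase_abs; lra).
      rewrite H, (Rabs_right eps) by lra. pose proof (Rabs_pos k). nra. }
    split; [apply Rabs_def2 in H; lra | apply Rabs_def2 in H; lra]. }
  assert (Bx : Rabs kx <= K) by (unfold K; pose proof (Rabs_pos ky); pose proof (Rabs_pos kz); lra).
  assert (By : Rabs ky <= K) by (unfold K; pose proof (Rabs_pos kx); pose proof (Rabs_pos kz); lra).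
  assert (Bz : Rabs kz <= K) by (unfold K; pose proof (Rabs_pos ky); pose proof (Rabs_pos kx); lra).
  assert (Bxy : Rabs (kx - ky) <= 2 * K).
  { pose proof (Rabs_triang kx (- ky)). rewrite Rabs_Ropp in H. unfold Rminus. lra. }
  pose proof (Hsmall kx Bx) as Sx. pose proof (Hsmall ky By) as Sy. pose proof (Hsmall kz Bz) as Sz.
  assert (EX : bx A B C m X = INR i + 5/12 + sg * eps * kx).
  { unfold X. rewrite (Xeps_aff _ ax bx0 w b sg eps Hx). fold rx ry. unfold kx. lra. }
  assert (EY : bY A B C m X = INR j + 5/12 + sg * eps * ky).
  { unfold X. rewrite (Xeps_aff _ ay by0 w b sg eps Hy). fold rx ry. unfold ky. lra. }
  assert (EZ : bz A B C m X = 1/6 + sg * eps * kz).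
  { unfold X. rewrite (Xeps_aff _ az bz0 w b sg eps Hz). fold rx ry. unfold kz. lra. }
  pose proof (pos_INR i); pose proof (pos_INR j).
  unfold InT, SN, SNc. rewrite EX, EY, EZ. rewrite !S_INR. simpl INR.
  assert (sg * eps * (kx - ky) = sg * eps * kx - sg * eps * ky) by ring.
  assert (sg * (kx - ky) > 0 -> sg * eps * (kx - ky) > 0).
  { intros. replace (sg * eps * (kx - ky)) with (eps * (sg * (kx - ky))) by ring. apply Rmult_lt_0_compat; lra. }
  assert (sg * (kx - ky) < 0 -> sg * eps * (kx - ky) < 0).
  { intros. replace (sg * eps * (kx - ky)) with (- (eps * (- (sg * (kx - ky))))) by ring.
    assert (0 < eps * (- (sg * (kx - ky)))) by (apply Rmult_lt_0_compat; lra). lra. }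
  repeat split; intros; try lra; lia.
Qed.

Lemma bx_rot A B C m q : bx B C A m q = bY A B C m q.
Proof. unfold bx, bY. replace (orient q C A) with (orient A q C) by (unfold orient; ring).
  replace (orient B C A) with (orient A B C) by (unfold orient; ring). reflexivity. Qed.
Lemma bY_rot A B C m q : bY B C A m q = bz A B C m q.
Proof. unfold bz, bY. replace (orient B q A) with (orient A B q) by (unfold orient; ring).
  replace (orient B C A) with (orient A B C) by (unfold orient; ring). reflexivity. Qed.
Lemma bz_rot A B C m q : bz B C A m q = bx A B C m q.
Proof. unfold bz, bx. replace (orient B C q) with (orient q B C) by (unfold orient; ring).
  replace (orient B C A) with (orient A B C) by (unfold orient; ring). reflexivity. Qed.
Lemma orient_rot A B C : orient B C A = orient A B C.
Proof. unfold orient; ring. Qed.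

Lemma InT_rot A B C m q : InT B C A m q -> InT A B C m q.
Proof. unfold InT. rewrite (bx_rot A B C), (bY_rot A B C), (bz_rot A B C). intros [H1 [H2 H3]]. split; [|split]; assumption. Qed.
Lemma SNc_rot m X Y Z i j k : SNc m Y Z X i j k -> SNc m X Y Z k i j.
Proof. intros [Hs [[H1 H2] [[H3 H4] [H5 H6]]]]. split; [lia|]. repeat split; lra. Qed.
Lemma SN_rot A B C m q i j k : SN B C A m q i j k -> SN A B C m q k i j.
Proof. unfold SN. rewrite (bx_rot A B C), (bY_rot A B C), (bz_rot A B C). apply SNc_rot. Qed.

Lemma white_rot A B C m i j k : white_node B C A m j k i = white_node A B C m i j k.
Proof. unfold white_node, bary. f_equal; unfold Rdiv; ring. Qed.
Lemma sAB_rotBC A B C m j k : sideAB_node B C A m j k = sideBC_node A B C m j k.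
Proof. unfold sideAB_node, sideBC_node, bary. f_equal; unfold Rdiv; ring. Qed.
Lemma sAB_rotAC A B C m i k : sideAB_node C A B m k i = sideAC_node A B C m i k.
Proof. unfold sideAB_node, sideAC_node, bary. f_equal; unfold Rdiv; ring. Qed.

Lemma arrowBC A B C m j k : orient A B C <> 0 -> (2 <= m)%nat -> (j + k = m - 1)%nat ->
  exists kap, kap <> 0 /\ forall sg, (sg = 1 \/ sg = -1) -> exists eps0, 0 < eps0 /\
    forall eps, 0 < eps < eps0 ->
      let X := Xeps (white_node A B C m 0 j k) (sideBC_node A B C m j k) sg eps in
      InT A B C m X /\ (sg * kap > 0 -> SN A B C m X 0 (S j) k) /\
      (sg * kap < 0 -> SN A B C m X 0 j (S k)).
Proof.
  intros HD Hm Hjk.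
  destruct (arrowAB B C A m j k ltac:(rewrite orient_rot; auto) Hm Hjk) as [kap [Hk H]].
  exists kap. split; auto. intros sg Hsg. destruct (H sg Hsg) as [e0 [He0 P]].
  exists e0. split; auto. intros eps Heps X. specialize (P eps Heps).
  rewrite white_rot, sAB_rotBC in P. simpl in P. fold X in P.
  destruct P as [P1 [P2 P3]]. split; [apply InT_rot; auto|].
  split; intros; apply SN_rot; auto.
Qed.

Lemma arrowAC A B C m i k : orient A B C <> 0 -> (2 <= m)%nat -> (i + k = m - 1)%nat ->
  exists kap, kap <> 0 /\ forall sg, (sg = 1 \/ sg = -1) -> exists eps0, 0 < eps0 /\
    forall eps, 0 < eps < eps0 ->
      let X := Xeps (white_node A B C m i 0 k) (sideAC_node A B C m i k) sg eps in
      InT A B C m X /\ (sg * kap > 0 -> SN A B C m X i 0 (S k)) /\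
      (sg * kap < 0 -> SN A B C m X (S i) 0 k).
Proof.
  intros HD Hm Hik.
  destruct (arrowAB C A B m k i ltac:(rewrite orient_rot, orient_rot; auto) Hm ltac:(lia)) as [kap [Hk H]].
  exists kap. split; auto. intros sg Hsg. destruct (H sg Hsg) as [e0 [He0 P]].
  exists e0. split; auto. intros eps Heps X. specialize (P eps Heps).
  rewrite (white_rot B C A m 0 k i), (white_rot A B C m i 0 k), sAB_rotAC in P. simpl in P. fold X in P.
  destruct P as [P1 [P2 P3]]. split; [apply InT_rot, InT_rot; auto|].
  split; intros; apply SN_rot, SN_rot; auto.
Qed.

Definition Q (n : nat) (p : nat -> pt) (a u : nat) : pt := p ((a + u) mod n).

Lemma mod_wrap x n : (n <= x < 2 * n)%nat -> (x mod n = x - n)%nat.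
Proof.
  intros H. replace x with ((x - n) + 1 * n)%nat at 1 by lia.
  rewrite Nat.Div0.mod_add. apply Nat.mod_small. lia.
Qed.

Lemma orient_cyc A B C : orient A B C = orient B C A.
Proof. unfold orient; ring. Qed.
Lemma orient_swap A B C : orient A C B = - orient A B C.
Proof. unfold orient; ring. Qed.
Lemma orient_rep1 A B : orient A A B = 0.
Proof. unfold orient; ring. Qed.
Lemma orient_rep2 A B : orient A B B = 0.
Proof. unfold orient; ring. Qed.
Lemma orient_rep3 A B : orient A B A = 0.
Proof. unfold orient; ring. Qed.

Lemma conv_sign n p a : (a < n)%nat -> convex_polygon n p ->
  exists sg, (sg = 1 \/ sg = -1) /\
    forall s u v, (s < u)%nat -> (u < v)%nat -> (v < n)%nat ->
      sg * orient (Q n p a s) (Q n p a u) (Q n p a v) > 0.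
Proof.
  intros Ha [Hc|Hc]; [exists 1 | exists (-1)]; split; auto; intros s u v H1 H2 H3;
  unfold Q.
  all: assert (Hn : n <> 0%nat) by lia.
  all: destruct (Nat.lt_ge_cases (a + s) n) as [Ws|Ws];
       destruct (Nat.lt_ge_cases (a + u) n) as [Wu|Wu];
       destruct (Nat.lt_ge_cases (a + v) n) as [Wv|Wv];
       try (exfalso; lia);
       rewrite ?(Nat.mod_small (a+s)), ?(Nat.mod_small (a+u)), ?(Nat.mod_small (a+v)) by lia;
       rewrite ?(mod_wrap (a+s)), ?(mod_wrap (a+u)), ?(mod_wrap (a+v)) by lia.
  all: first
    [ specialize (Hc (a+s)%nat (a+u)%nat (a+v)%nat ltac:(lia) ltac:(lia) ltac:(lia)); lra
    | specialize (Hc (a+v-n)%nat (a+s)%nat (a+u)%nat ltac:(lia) ltac:(lia) ltac:(lia));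
      rewrite orient_cyc, orient_cyc; lra
    | specialize (Hc (a+u-n)%nat (a+v-n)%nat (a+s)%nat ltac:(lia) ltac:(lia) ltac:(lia));
      rewrite orient_cyc; lra
    | specialize (Hc (a+s-n)%nat (a+u-n)%nat (a+v-n)%nat ltac:(lia) ltac:(lia) ltac:(lia)); lra].
Qed.

Lemma Q0 n p a : (a < n)%nat -> Q n p a 0 = p a.
Proof. intros. unfold Q. rewrite Nat.add_0_r, Nat.mod_small; auto. Qed.

Lemma fan_Q n p a t : (a < n)%nat -> fan_tri n p a t = (Q n p a 0, Q n p a t, Q n p a (S t)).
Proof. intros. unfold fan_tri. rewrite Q0 by auto. unfold Q. replace (a + S t)%nat with (a+t+1)%nat by lia. reflexivity. Qed.

Lemma p_Q n p a i : (a < n)%nat -> (i < n)%nat -> exists u, (u < n)%nat /\ p i = Q n p a u.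
Proof.
  intros Ha Hi. exists ((i + n - a) mod n)%nat. split.
  - apply Nat.mod_upper_bound; lia.
  - unfold Q. rewrite Nat.Div0.add_mod_idemp_r.
    replace (a + (i + n - a))%nat with (i + 1 * n)%nat by lia.
    rewrite Nat.Div0.mod_add, Nat.mod_small; auto.
Qed.

Lemma orient_aff3 X Y A B C m x y z : (1 <= m)%nat -> x + y + z = INR m ->
  orient X Y (posT A B C m x y z) =
  (x * orient X Y A + y * orient X Y B + z * orient X Y C) / INR m.
Proof.
  intros Hm Hs. pose proof (INR_pos_m m Hm).
  destruct X as [x1 x2]; destruct Y as [y1 y2];
  destruct A as [ax ay]; destruct B as [bx0 by0]; destruct C as [cx cy].
  unfold posT, bary, orient in *; simpl. rewrite <- Hs. field. lra.
Qed.

Definition SignHyp n p a sg := (sg = 1 \/ sg = -1) /\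
    forall s u v, (s < u)%nat -> (u < v)%nat -> (v < n)%nat ->
      sg * orient (Q n p a s) (Q n p a u) (Q n p a v) > 0.

Lemma D_nz n p a sg t : SignHyp n p a sg -> (1 <= t)%nat -> (t <= n - 2)%nat -> (3 <= n)%nat ->
  orient (Q n p a 0) (Q n p a t) (Q n p a (S t)) <> 0.
Proof.
  intros [Hsg H] H1 H2 H3. specialize (H 0%nat t (S t) ltac:(lia) ltac:(lia) ltac:(lia)).
  intro E. rewrite E in H. lra.
Qed.

Lemma TR n p a m sg t t' x y z x' y' z' :
  SignHyp n p a sg -> (4 <= n)%nat -> (1 <= m)%nat ->
  (1 <= t)%nat -> (t < t')%nat -> (t' <= n - 2)%nat ->
  0 <= x -> 0 <= y -> 0 <= z -> 0 <= x' -> 0 <= y' -> 0 <= z' ->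
  x + y + z = INR m -> x' + y' + z' = INR m ->
  posT (Q n p a 0) (Q n p a t) (Q n p a (S t)) m x y z =
  posT (Q n p a 0) (Q n p a t') (Q n p a (S t')) m x' y' z' ->
  (t' = S t /\ y = 0 /\ z' = 0 /\ x = x' /\ z = y') \/
  (x = INR m /\ y = 0 /\ z = 0 /\ x' = INR m /\ y' = 0 /\ z' = 0).
Proof.
  intros HS Hn Hm H1 H2 H3 Px Py Pz Px' Py' Pz' Hs Hs' E.
  pose proof (INR_pos_m m Hm) as Hm0. pose proof (lt_0_INR m ltac:(lia)) as Hmp.
  destruct HS as [Hsg HH].
  set (A := Q n p a 0) in *.
  assert (E2 : orient A (Q n p a (S t)) (posT A (Q n p a t) (Q n p a (S t)) m x y z) =
               orient A (Q n p a (S t)) (posT A (Q n p a t') (Q n p a (S t')) m x' y' z'))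
    by (rewrite E; reflexivity).
  rewrite !orient_aff3 in E2 by auto.
  rewrite ?orient_rep2, ?orient_rep3 in E2.
  pose proof (HH 0%nat t (S t) ltac:(lia) ltac:(lia) ltac:(lia)) as o1.
  pose proof (HH 0%nat (S t) (S t') ltac:(lia) ltac:(lia) ltac:(lia)) as o3.
  fold A in o1, o3.
  rewrite (orient_swap A (Q n p a t) (Q n p a (S t))) in E2.
  set (c1 := orient A (Q n p a t) (Q n p a (S t))) in *.
  set (c3 := orient A (Q n p a (S t)) (Q n p a (S t'))) in *.
  set (c2 := orient A (Q n p a (S t)) (Q n p a t')) in *.
  assert (o2 : sg * c2 >= 0).
  { destruct (Nat.eq_dec t' (S t)) as [->|Hne].
    - unfold c2. rewrite orient_rep2. lra.
    - pose proof (HH 0%nat (S t) t' ltac:(lia) ltac:(lia) ltac:(lia)). fold A in H. unfold c2; lra. }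
  assert (E3 : y * (sg * c1) + y' * (sg * c2) + z' * (sg * c3) = 0).
  { apply (Rmult_eq_compat_l (sg * INR m)) in E2.
    replace (sg * INR m * ((x * 0 + y * - c1 + z * 0) / INR m)) with (- (y * (sg * c1))) in E2 by (field; auto).
    replace (sg * INR m * ((x' * 0 + y' * c2 + z' * c3) / INR m)) with (y' * (sg*c2) + z' * (sg*c3)) in E2 by (field; auto).
    lra. }
  assert (Hy : y = 0) by nra.
  assert (Hz' : z' = 0) by nra.
  subst y z'.
  destruct (Nat.eq_dec t' (S t)) as [->|Hne].
  - left.
    assert (E4 : posT A (Q n p a t) (Q n p a (S t)) m x 0 z = posT A (Q n p a (S t)) (Q n p a (S (S t))) m x z 0).
    { unfold posT, bary. f_equal; field; auto. }
    rewrite E4 in E.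
    destruct (posT_inj _ _ _ m x z 0 x' y' 0 (D_nz n p a sg (S t) (conj Hsg HH) ltac:(lia) ltac:(lia) ltac:(lia)) Hm ltac:(lra) ltac:(lra) E) as [Ex [Ez _]].
    repeat split; auto.
  - right.
    pose proof (HH 0%nat (S t) t' ltac:(lia) ltac:(lia) ltac:(lia)) as o2'. fold A in o2'. fold c2 in o2'.
    assert (Hy' : y' = 0) by nra. subst y'.
    assert (Hx' : x' = INR m) by lra. subst x'.
    assert (E4 : posT A (Q n p a t') (Q n p a (S t')) m (INR m) 0 0 = posT A (Q n p a t) (Q n p a (S t)) m (INR m) 0 0).
    { unfold posT, bary. f_equal; field; auto. }
    rewrite E4 in E.
    destruct (posT_inj _ _ _ m x 0 z (INR m) 0 0 (D_nz n p a sg t (conj Hsg HH) ltac:(lia) ltac:(lia) ltac:(lia)) Hm ltac:(lra) ltac:(lra) E) as [? [? ?]].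
    repeat split; auto.
Qed.

Lemma sum_lin (l u v : nat -> R) c0 c1 c2 N :
  sum_f_R0 (fun i => l i * (c0 + c1 * u i + c2 * v i)) N =
  c0 * sum_f_R0 l N + c1 * sum_f_R0 (fun i => l i * u i) N + c2 * sum_f_R0 (fun i => l i * v i) N.
Proof. induction N; simpl; [ring | rewrite IHN; ring]. Qed.

Lemma sum_nonneg (f : nat -> R) N : (forall i, (i <= N)%nat -> 0 <= f i) -> 0 <= sum_f_R0 f N.
Proof.
  induction N; intros H; simpl.
  - apply H; lia.
  - pose proof (H (S N) (le_n _)). assert (0 <= sum_f_R0 f N) by (apply IHN; intros; apply H; lia). lra.
Qed.

Lemma hull_orient n p q X Y sg : (1 <= n)%nat -> in_polygon n p q ->
  (forall i, (i < n)%nat -> 0 <= sg * orient X Y (p i)) -> 0 <= sg * orient X Y q.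
Proof.
  intros Hn [lam [Hl [Hs [Hx Hy]]]] H.
  set (c1 := - sg * (snd Y - snd X)). set (c2 := sg * (fst Y - fst X)).
  set (c0 := sg * (- (fst Y - fst X) * snd X + (snd Y - snd X) * fst X)).
  assert (E : forall r, sg * orient X Y r = c0 + c1 * fst r + c2 * snd r).
  { intros r. unfold c0, c1, c2, orient. ring. }
  rewrite E, Hx, Hy.
  replace c0 with (c0 * sum_f_R0 lam (n - 1)) by (rewrite Hs; ring).
  rewrite <- sum_lin. apply sum_nonneg. intros i Hi.
  apply Rmult_le_pos. apply Hl; lia. rewrite <- E. apply H. lia.
Qed.

Lemma disc_ivt (f : nat -> R) N : (2 <= N)%nat -> 0 <= f 1%nat -> f N <= 0 ->
  exists t, (1 <= t)%nat /\ (t < N)%nat /\ 0 <= f t /\ f (S t) <= 0.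
Proof.
  induction N; intros HN H1 H2; [lia|].
  destruct (Nat.eq_dec N 1) as [->|Hne].
  - exists 1%nat. repeat split; auto.
  - destruct (Rle_dec (f N) 0) as [Hl|Hl].
    + destruct (IHN ltac:(lia) H1 Hl) as [t [? [? [? ?]]]]. exists t. repeat split; auto; lia.
    + exists N. repeat split; auto; lia || lra.
Qed.

Lemma div_sign sg m N D : (sg = 1 \/ sg = -1) -> 0 <= sg * N -> sg * D > 0 -> 0 <= INR m * N / D.
Proof.
  intros [->| ->] HN HD; pose proof (pos_INR m).
  - unfold Rdiv. apply Rmult_le_pos; [nra|]. apply Rlt_le, Rinv_0_lt_compat; lra.
  - replace (INR m * N / D) with (INR m * (-N) / (-D)) by (field; lra).
    unfold Rdiv. apply Rmult_le_pos; [nra|]. apply Rlt_le, Rinv_0_lt_compat; lra.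
Qed.

Lemma cover n p a m sg q : SignHyp n p a sg -> (4 <= n)%nat -> (a < n)%nat -> in_polygon n p q ->
  exists t, (1 <= t)%nat /\ (t <= n - 2)%nat /\ InT (Q n p a 0) (Q n p a t) (Q n p a (S t)) m q.
Proof.
  intros [Hsg HH] Hn Ha Hq.
  assert (Hall : forall X Y sg', (forall u, (u < n)%nat -> 0 <= sg' * orient X Y (Q n p a u)) ->
                  0 <= sg' * orient X Y q).
  { intros X Y sg' Hu. apply (hull_orient n p); auto; try lia.
    intros i Hi. destruct (p_Q n p a i Ha Hi) as [u [Hu' ->]]. auto. }
  set (f := fun s => sg * orient (Q n p a 0) (Q n p a s) q).
  assert (F1 : 0 <= f 1%nat).
  { apply Hall. intros u Hu. destruct (Nat.lt_ge_cases u 2) as [H|H].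
    - destruct u as [|[|u]]; try lia.
      + rewrite orient_rep3. lra.
      + rewrite orient_rep2. lra.
    - specialize (HH 0%nat 1%nat u ltac:(lia) ltac:(lia) Hu). lra. }
  assert (F2 : f (n - 1)%nat <= 0).
  { assert (0 <= (- sg) * orient (Q n p a 0) (Q n p a (n-1)) q); [|unfold f; lra].
    apply Hall. intros u Hu.
    destruct (Nat.eq_dec u 0) as [->|H0]; [rewrite orient_rep3; lra|].
    destruct (Nat.eq_dec u (n-1)) as [->|H1]; [rewrite orient_rep2; lra|].
    specialize (HH 0%nat u (n-1)%nat ltac:(lia) ltac:(lia) ltac:(lia)).
    rewrite orient_swap. lra. }
  destruct (disc_ivt f (n-1) ltac:(lia) F1 F2) as [t [Ht1 [Ht2 [Ft Ft']]]].
  exists t. split; auto. split; [lia|].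
  pose proof (HH 0%nat t (S t) ltac:(lia) ltac:(lia) ltac:(lia)) as HD.
  unfold InT, bx, bY, bz. repeat split; apply (div_sign sg); auto.
  - rewrite orient_cyc. apply Hall. intros u Hu.
    destruct (Nat.lt_ge_cases u t) as [H|H].
    + specialize (HH u t (S t) H ltac:(lia) ltac:(lia)). rewrite orient_cyc, orient_cyc. lra.
    + destruct (Nat.eq_dec u t) as [->|H0]; [rewrite orient_rep3; lra|].
      destruct (Nat.eq_dec u (S t)) as [->|H1]; [rewrite orient_rep2; lra|].
      specialize (HH t (S t) u ltac:(lia) ltac:(lia) Hu). lra.
  - rewrite (orient_swap (Q n p a 0) (Q n p a (S t)) q). unfold f in Ft'. simpl in Ft'. lra.
Qed.

Lemma SNc_zero_y m X Y Z i j k : SNc m X Y Z i j k -> X + Y + Z = INR m -> Y = 0 -> j = 0%nat.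
Proof.
  intros [Hs [[H1 H2] [[H3 H4] [H5 H6]]]] HS HY. subst Y.
  destruct j as [|j]; auto. exfalso. pose proof (INR_sum3 i (S j) k m Hs) as Hq. rewrite S_INR in *. pose proof (pos_INR j). lra.
Qed.
Lemma SNc_zero_z m X Y Z i j k : SNc m X Y Z i j k -> X + Y + Z = INR m -> Z = 0 -> k = 0%nat.
Proof.
  intros [Hs [[H1 H2] [[H3 H4] [H5 H6]]]] HS HZ. subst Z.
  destruct k as [|k]; auto. exfalso. pose proof (INR_sum3 i j (S k) m Hs) as Hq. rewrite S_INR in *. pose proof (pos_INR k). lra.
Qed.
Lemma SNc_zero_x m X Y Z i j k : SNc m X Y Z i j k -> X + Y + Z = INR m -> X = 0 -> i = 0%nat.
Proof.
  intros [Hs [[H1 H2] [[H3 H4] [H5 H6]]]] HS HX. subst X.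
  destruct i as [|i]; auto. exfalso. pose proof (INR_sum3 (S i) j k m Hs) as Hq. rewrite S_INR in *. pose proof (pos_INR i). lra.
Qed.

Definition post n p a m t x y z := posT (Q n p a 0) (Q n p a t) (Q n p a (S t)) m x y z.
Definition inTt n p a m t q := InT (Q n p a 0) (Q n p a t) (Q n p a (S t)) m q.
Definition SNt n p a m t q i j k := SN (Q n p a 0) (Q n p a t) (Q n p a (S t)) m q i j k.
Definition Cell n p a m (v q : pt) := forall t, (1 <= t)%nat -> (t <= n - 2)%nat -> inTt n p a m t q ->
  exists i j k, SNt n p a m t q i j k /\ v = post n p a m t (INR i) (INR j) (INR k).

Lemma post_side n p a m t x z : (1 <= m)%nat ->
  post n p a m t x 0 z = post n p a m (S t) x z 0.
Proof. intros Hm. pose proof (INR_pos_m m Hm). unfold post, posT, bary. f_equal; field; auto. Qed.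
Lemma post_apex n p a m t t' : (1 <= m)%nat ->
  post n p a m t (INR m) 0 0 = post n p a m t' (INR m) 0 0.
Proof. intros Hm. pose proof (INR_pos_m m Hm). unfold post, posT, bary. f_equal; field; auto. Qed.

Lemma transfer n p a m sg t t' q i j k : SignHyp n p a sg -> (4 <= n)%nat -> (2 <= m)%nat ->
  (1 <= t)%nat -> (t <= n - 2)%nat -> (1 <= t')%nat -> (t' <= n - 2)%nat ->
  inTt n p a m t q -> inTt n p a m t' q -> SNt n p a m t q i j k ->
  exists i' j' k', SNt n p a m t' q i' j' k' /\
     post n p a m t (INR i) (INR j) (INR k) = post n p a m t' (INR i') (INR j') (INR k').
Proof.
  intros HS Hn Hm H1 H2 H1' H2' Hin Hin' HSN.
  assert (Hm1 : (1 <= m)%nat) by lia.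
  pose proof (D_nz n p a sg t HS H1 H2 ltac:(lia)) as D1.
  pose proof (D_nz n p a sg t' HS H1' H2' ltac:(lia)) as D2.
  unfold inTt, SNt, SN, InT in *.
  pose proof (bsum _ _ _ m q D1) as S1. pose proof (bsum _ _ _ m q D2) as S2.
  pose proof (pos_bc _ _ _ m q D1 Hm1) as P1. pose proof (pos_bc _ _ _ m q D2 Hm1) as P2.
  set (X := bx (Q n p a 0) (Q n p a t) (Q n p a (S t)) m q) in *.
  set (Y := bY (Q n p a 0) (Q n p a t) (Q n p a (S t)) m q) in *.
  set (Z := bz (Q n p a 0) (Q n p a t) (Q n p a (S t)) m q) in *.
  set (X' := bx (Q n p a 0) (Q n p a t') (Q n p a (S t')) m q) in *.
  set (Y' := bY (Q n p a 0) (Q n p a t') (Q n p a (S t')) m q) in *.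
  set (Z' := bz (Q n p a 0) (Q n p a t') (Q n p a (S t')) m q) in *.
  destruct Hin as [PX [PY PZ]]. destruct Hin' as [PX' [PY' PZ']].
  assert (E : posT (Q n p a 0) (Q n p a t) (Q n p a (S t)) m X Y Z =
              posT (Q n p a 0) (Q n p a t') (Q n p a (S t')) m X' Y' Z') by congruence.
  destruct (Nat.lt_total t t') as [Hlt|[Heq|Hgt]].
  - destruct (TR n p a m sg t t' X Y Z X' Y' Z' HS Hn Hm1 H1 Hlt H2' PX PY PZ PX' PY' PZ' S1 S2 E)
      as [[-> [HY [HZ' [HX HZ]]]] | [HX [HY [HZ [HX' [HY' HZ']]]]]].
    + pose proof (SNc_zero_y _ _ _ _ _ _ _ HSN S1 HY); subst j.
      exists i, k, 0%nat. split.
      * destruct HSN as [Hs [[A1 A2] [[A3 A4] [A5 A6]]]].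
        split; [lia|]. simpl INR in *. rewrite <- HX, <- HZ, HZ'. repeat split; lra.
      * simpl INR. apply post_side; auto.
    + pose proof (SNc_zero_y _ _ _ _ _ _ _ HSN S1 HY); subst j.
      pose proof (SNc_zero_z _ _ _ _ _ _ _ HSN S1 HZ); subst k.
      assert (i = m) by (destruct HSN; lia). subst i.
      exists m, 0%nat, 0%nat. split.
      * split; [lia|]. simpl INR. rewrite HX', HY', HZ'. repeat split; lra.
      * simpl INR. apply post_apex; auto.
  - subst t'. exists i, j, k. split; auto.
  - destruct (TR n p a m sg t' t X' Y' Z' X Y Z HS Hn Hm1 H1' Hgt H2 PX' PY' PZ' PX PY PZ S2 S1 (eq_sym E))
      as [[-> [HY' [HZ [HX HZ']]]] | [HX' [HY' [HZ' [HX [HY HZ]]]]]].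
    + pose proof (SNc_zero_z _ _ _ _ _ _ _ HSN S1 HZ); subst k.
      exists i, 0%nat, j. split.
      * destruct HSN as [Hs [[A1 A2] [[A3 A4] [A5 A6]]]].
        split; [lia|]. simpl INR in *. rewrite HX, HZ', HY'. repeat split; lra.
      * simpl INR. symmetry. apply post_side; auto.
    + pose proof (SNc_zero_y _ _ _ _ _ _ _ HSN S1 HY); subst j.
      pose proof (SNc_zero_z _ _ _ _ _ _ _ HSN S1 HZ); subst k.
      assert (i = m) by (destruct HSN; lia). subst i.
      exists m, 0%nat, 0%nat. split.
      * split; [lia|]. simpl INR. rewrite HX', HY', HZ'. repeat split; lra.
      * simpl INR. apply post_apex; auto.
Qed.

Lemma dimer_edge_iff n p a m w b : (a < n)%nat ->
  dimer_edge n p a m w b <-> exists t, (1 <= t)%nat /\ (t <= n - 2)%nat /\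
     tri_edge (Q n p a 0) (Q n p a t) (Q n p a (S t)) m w b.
Proof.
  intros Ha. unfold dimer_edge. split.
  - intros [t [[H1 H2] H]]. rewrite fan_Q in H by auto. exists t; auto.
  - intros [t [H1 [H2 H]]]. exists t. split; [lia|]. rewrite fan_Q by auto. exact H.
Qed.

Lemma cell_of n p a m sg t q i j k : SignHyp n p a sg -> (4 <= n)%nat -> (2 <= m)%nat ->
  (1 <= t)%nat -> (t <= n - 2)%nat -> inTt n p a m t q -> SNt n p a m t q i j k ->
  Cell n p a m (post n p a m t (INR i) (INR j) (INR k)) q.
Proof.
  intros HS Hn Hm H1 H2 Hin HSN t' H1' H2' Hin'.
  apply (transfer n p a m sg t t' q i j k); auto.
Qed.

Lemma cell_not_graph n p a m sg v q : SignHyp n p a sg -> (4 <= n)%nat -> (2 <= m)%nat -> (a < n)%nat ->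
  Cell n p a m v q -> ~ on_graph n p a m q.
Proof.
  intros HS Hn Hm Ha HC [w [b [s [Hd [Hs Hq]]]]].
  apply dimer_edge_iff in Hd; auto. destruct Hd as [t [H1 [H2 Ht]]].
  pose proof (D_nz n p a sg t HS H1 H2 ltac:(lia)) as D.
  destruct (T1 _ _ _ m w b s D Hm Ht Hs) as [Hin Hno].
  change (fst w + s * (fst b - fst w), snd w + s * (snd b - snd w)) with (seg w b s) in Hq.
  subst q. destruct (HC t H1 H2 Hin) as [i [j [k [HSN _]]]]. apply (Hno i j k HSN).
Qed.

Lemma cell_unique n p a m sg v v' q : SignHyp n p a sg -> (4 <= n)%nat -> (2 <= m)%nat -> (a < n)%nat ->
  in_polygon n p q -> Cell n p a m v q -> Cell n p a m v' q -> v = v'.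
Proof.
  intros HS Hn Hm Ha Hq HC HC'.
  destruct (cover n p a m sg q HS Hn Ha Hq) as [t [H1 [H2 Hin]]].
  destruct (HC t H1 H2 Hin) as [i [j [k [HSN ->]]]].
  destruct (HC' t H1 H2 Hin) as [i' [j' [k' [HSN' ->]]]].
  pose proof (D_nz n p a sg t HS H1 H2 ltac:(lia)) as D.
  pose proof (SN_unique m _ _ _ i j k i' j' k' (bsum _ _ _ m q D) HSN HSN') as E.
  injection E as -> -> ->. reflexivity.
Qed.

Lemma cell_exists n p a m sg q : SignHyp n p a sg -> (4 <= n)%nat -> (2 <= m)%nat -> (a < n)%nat ->
  region n p a m q -> exists t i j k, (1 <= t)%nat /\ (t <= n - 2)%nat /\ inTt n p a m t q /\
     SNt n p a m t q i j k /\ Cell n p a m (post n p a m t (INR i) (INR j) (INR k)) q.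
Proof.
  intros HS Hn Hm Ha [Hq Hng].
  destruct (cover n p a m sg q HS Hn Ha Hq) as [t [H1 [H2 Hin]]].
  pose proof (D_nz n p a sg t HS H1 H2 ltac:(lia)) as D.
  destruct (T2 _ _ _ m q D Hm Hin) as [[i [j [k HSN]]] | [w [b [s [He [Hs Hqs]]]]]].
  - exists t, i, j, k. split; [auto|split;[auto|split;[exact Hin|split;[exact HSN|]]]].
    apply (cell_of n p a m sg); auto.
  - exfalso. apply Hng. exists w, b, s. split.
    + apply dimer_edge_iff; auto. exists t; auto.
    + split; auto.
Qed.

Lemma notInT_open A B C m q : orient A B C <> 0 -> ~ InT A B C m q ->
  exists d, 0 < d /\ forall q', near d q q' -> ~ InT A B C m q'.
Proof.
  intros HD Hout. unfold InT in Hout.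
  destruct (Rlt_le_dec (bx A B C m q) 0) as [N|N].
  { destruct (open_neg _ q (aff_bx A B C m HD) N) as [d [Hd P]]. exists d; split; auto.
    intros q' Hn [Hi _]. specialize (P q' Hn). lra. }
  destruct (Rlt_le_dec (bY A B C m q) 0) as [N'|N'].
  { destruct (open_neg _ q (aff_bY A B C m HD) N') as [d [Hd P]]. exists d; split; auto.
    intros q' Hn [_ [Hi _]]. specialize (P q' Hn). lra. }
  destruct (Rlt_le_dec (bz A B C m q) 0) as [N''|N''].
  { destruct (open_neg _ q (aff_bz A B C m HD) N'') as [d [Hd P]]. exists d; split; auto.
    intros q' Hn [_ [_ Hi]]. specialize (P q' Hn). lra. }
  exfalso; apply Hout; auto.
Qed.

Lemma open_finite (P : nat -> pt -> Prop) q N :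
  (forall t, (1 <= t)%nat -> (t <= N)%nat -> exists d, 0 < d /\ forall q', near d q q' -> P t q') ->
  exists d, 0 < d /\ forall q', near d q q' -> forall t, (1 <= t)%nat -> (t <= N)%nat -> P t q'.
Proof.
  induction N; intros H.
  - exists 1. split; [lra|]. intros; lia.
  - destruct IHN as [d1 [Hd1 P1]]. { intros t H1 H2. apply H; lia. }
    destruct (H (S N) ltac:(lia) ltac:(lia)) as [d2 [Hd2 P2]].
    exists (Rmin d1 d2). split; [apply Rmin_pos; auto|].
    intros q' Hn t H1 H2. destruct (Nat.eq_dec t (S N)) as [->|Hne].
    + apply P2. apply (near_mono (Rmin d1 d2)); auto. apply Rmin_r.
    + apply P1; [|lia|lia]. apply (near_mono (Rmin d1 d2)); auto. apply Rmin_l.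
Qed.

Lemma cell_open n p a m sg v q : SignHyp n p a sg -> (4 <= n)%nat -> (2 <= m)%nat ->
  Cell n p a m v q -> exists d, 0 < d /\ forall q', near d q q' -> Cell n p a m v q'.
Proof.
  intros HS Hn Hm HC.
  destruct (open_finite (fun t q' => inTt n p a m t q' ->
      exists i j k, SNt n p a m t q' i j k /\ v = post n p a m t (INR i) (INR j) (INR k)) q (n - 2))
    as [d [Hd P]].
  - intros t H1 H2.
    pose proof (D_nz n p a sg t HS H1 H2 ltac:(lia)) as D.
    destruct (classic (inTt n p a m t q)) as [Hin|Hout].
    + destruct (HC t H1 H2 Hin) as [i [j [k [HSN Hv]]]].
      destruct (SN_open _ _ _ m q i j k D HSN) as [d [Hd P]].
      exists d. split; auto. intros q' Hn' _. exists i, j, k. split; [apply P; auto | auto].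
    + destruct (notInT_open _ _ _ m q D Hout) as [d [Hd P]].
      exists d. split; auto. intros q' Hn' Hin'. exfalso. apply (P q' Hn' Hin').
  - exists d. split; auto.
Qed.

Lemma cont_eps f x : continuity_pt f x -> forall eps, 0 < eps ->
  exists d, 0 < d /\ forall y, Rabs (y - x) < d -> Rabs (f y - f x) < eps.
Proof.
  intros H eps Heps. unfold continuity_pt, continue_in, limit1_in, limit_in in H.
  destruct (H eps Heps) as [d [Hd P]]. exists d. split; auto. intros y Hy.
  destruct (Req_dec y x) as [->|Hne].
  - rewrite Rminus_diag, Rabs_R0; auto.
  - apply P. split.
    + unfold D_x, no_cond. split; auto.
    + simpl. unfold R_dist. auto.
Qed.

Lemma loc_const_cont f a : (exists d, 0 < d /\ forall x, Rabs (x - a) < d -> f x = f a) ->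
  continuity_pt f a.
Proof.
  intros [d [Hd H]]. unfold continuity_pt, continue_in, limit1_in, limit_in.
  intros eps Heps. exists d. split; auto. intros x [_ Hx]. simpl in *. unfold R_dist in *.
  rewrite (H x Hx), Rminus_diag, Rabs_R0; auto.
Qed.

Definition clamp (s : R) := Rmax 0 (Rmin 1 s).
Lemma clamp_in s : 0 <= clamp s <= 1.
Proof. unfold clamp, Rmax, Rmin. repeat destruct Rle_dec; lra. Qed.
Lemma clamp_id s : 0 <= s <= 1 -> clamp s = s.
Proof. intros. unfold clamp, Rmax, Rmin. repeat destruct Rle_dec; lra. Qed.
Lemma clamp_dist s a : 0 <= a <= 1 -> Rabs (clamp s - a) <= Rabs (s - a).
Proof.
  intros. unfold clamp, Rmax, Rmin. repeat destruct Rle_dec; unfold Rabs; repeat destruct Rcase_abs; lra.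
Qed.

Lemma conn_cell n p a m sg v q1 q2 : SignHyp n p a sg -> (4 <= n)%nat -> (2 <= m)%nat -> (a < n)%nat ->
  conn n p a m q1 q2 -> Cell n p a m v q1 -> Cell n p a m v q2.
Proof.
  intros HS Hn Hm Ha [g [Hcont [H0 [H1 Hreg]]]] HC1.
  destruct (classic (Cell n p a m v q2)) as [HC2|HC2]; auto. exfalso.
  set (h := fun s => if excluded_middle_informative (Cell n p a m v (g (clamp s))) then 1 else -1).
  assert (LC : forall a0, 0 <= a0 <= 1 -> exists d, 0 < d /\ forall s, Rabs (s - a0) < d ->
             (Cell n p a m v (g (clamp s)) <-> Cell n p a m v (g a0))).
  { intros a0 Ha0. destruct (Hcont a0 Ha0) as [Cx Cy].
    assert (Hnear : forall d, 0 < d -> exists e, 0 < e /\ forall s, Rabs (s - a0) < e -> near d (g a0) (g (clamp s))).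
    { intros d Hd. destruct (cont_eps _ _ Cx d Hd) as [e1 [He1 P1]].
      destruct (cont_eps _ _ Cy d Hd) as [e2 [He2 P2]].
      exists (Rmin e1 e2). split; [apply Rmin_pos; auto|]. intros s Hs.
      pose proof (clamp_dist s a0 Ha0). pose proof (Rmin_l e1 e2). pose proof (Rmin_r e1 e2).
      split; [apply P1 | apply P2]; lra. }
    destruct (classic (Cell n p a m v (g a0))) as [Hc|Hc].
    - destruct (cell_open n p a m sg v (g a0) HS Hn Hm Hc) as [d [Hd P]].
      destruct (Hnear d Hd) as [e [He Pe]]. exists e. split; auto. intros s Hs. split; auto.
    - destruct (cell_exists n p a m sg (g a0) HS Hn Hm Ha (Hreg a0 Ha0)) as [t [i [j [k [_ [_ [_ [_ Hc']]]]]]]].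
      set (v' := post n p a m t (INR i) (INR j) (INR k)) in *.
      destruct (cell_open n p a m sg v' (g a0) HS Hn Hm Hc') as [d [Hd P]].
      destruct (Hnear d Hd) as [e [He Pe]]. exists e. split; auto. intros s Hs. split; [|tauto].
      intros Hcv. exfalso. apply Hc.
      assert (v = v').
      { apply (cell_unique n p a m sg v v' (g (clamp s))); auto.
        all: first [apply (Hreg (clamp s) (clamp_in s)) | apply P; apply Pe; auto]. }
      rewrite H. exact Hc'. }
  assert (Hh : forall s, h s = 1 \/ h s = -1).
  { intros s. unfold h. destruct excluded_middle_informative; auto. }
  assert (Hcont_h : forall a0, 0 <= a0 <= 1 -> continuity_pt (fun s => - h s) a0).
  { intros a0 Ha0. apply loc_const_cont. destruct (LC a0 Ha0) as [d [Hd P]].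
    exists d. split; auto. intros x Hx. unfold h.
    rewrite (clamp_id a0) by auto.
    destruct (excluded_middle_informative (Cell n p a m v (g (clamp x)))) as [c1|c1];
    destruct (excluded_middle_informative (Cell n p a m v (g a0))) as [c2|c2];
    try reflexivity; exfalso.
    - apply c2. apply (P x Hx). auto.
    - apply c1. apply (P x Hx). auto. }
  assert (F0 : - h 0 < 0).
  { unfold h. rewrite clamp_id by lra. rewrite H0.
    destruct (excluded_middle_informative (Cell n p a m v q1)); [lra| contradiction]. }
  assert (F1 : 0 < - h 1).
  { unfold h. rewrite clamp_id by lra. rewrite H1.
    destruct (excluded_middle_informative (Cell n p a m v q2)); [contradiction|lra]. }
  destruct (Ranalysis5.IVT_interv (fun s => - h s) 0 1 Hcont_h ltac:(lra) F0 F1) as [z [_ Hz]].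
  destruct (Hh z); lra.
Qed.

Lemma lip_cont f s0 : (exists d L, 0 < d /\ 0 <= L /\ forall s, Rabs (s - s0) < d -> Rabs (f s - f s0) <= L * Rabs (s - s0)) ->
  continuity_pt f s0.
Proof.
  intros [d [L [Hd [HL H]]]]. unfold continuity_pt, continue_in, limit1_in, limit_in.
  intros eps Heps. exists (Rmin d (eps / (L + 1))). split.
  { apply Rmin_pos; auto. apply Rdiv_lt_0_compat; lra. }
  intros x [_ Hx]. simpl in *. unfold R_dist in *.
  pose proof (Rmin_l d (eps / (L + 1))). pose proof (Rmin_r d (eps / (L + 1))).
  specialize (H x ltac:(lra)). pose proof (Rabs_pos (x - s0)).
  assert (L * Rabs (x - s0) <= L * (eps / (L + 1))) by (apply Rmult_le_compat_l; lra).
  assert (L * (eps / (L + 1)) < eps).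
  { assert (E : L * (eps / (L+1)) = eps - eps / (L+1)) by (field; lra).
    assert (0 < eps / (L + 1)) by (apply Rdiv_lt_0_compat; lra). lra. }
  lra.
Qed.

Lemma lin_cont c0 c1 s0 : continuity_pt (fun s => c0 + s * c1) s0.
Proof.
  apply lip_cont. exists 1, (Rabs c1). split; [lra|]. split; [apply Rabs_pos|].
  intros s _. replace (c0 + s * c1 - (c0 + s0 * c1)) with ((s - s0) * c1) by ring.
  rewrite Rabs_mult. rewrite Rmult_comm. lra.
Qed.

Lemma conn_seg n p a m x y : (forall s, 0 <= s <= 1 -> region n p a m (seg x y s)) -> conn n p a m x y.
Proof.
  intros H. exists (seg x y). split; [|split; [|split]].
  - intros t _. unfold seg; simpl. split; apply lin_cont.
  - unfold seg. destruct x; simpl. f_equal; ring.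
  - unfold seg. destruct x, y; simpl. f_equal; ring.
  - exact H.
Qed.

Definition path2 (x y z : pt) (s : R) : pt :=
  if Rle_dec s (1/2) then seg x y (2 * s) else seg y z (2 * s - 1).

Lemma path2_cont_coord (f : pt -> R) x y z s0 :
  (forall u v s, f (seg u v s) = f u + s * (f v - f u)) ->
  continuity_pt (fun s => f (path2 x y z s)) s0.
Proof.
  intros Hf. apply lip_cont.
  set (L := 2 * (Rabs (f y - f x) + Rabs (f z - f y))).
  assert (HL : 0 <= L) by (unfold L; pose proof (Rabs_pos (f y - f x)); pose proof (Rabs_pos (f z - f y)); lra).
  assert (Kx : forall s, s <= 1/2 -> f (path2 x y z s) = f y + (2 * s - 1) * (f y - f x)).
  { intros s Hs. unfold path2. destruct Rle_dec; [|lra]. rewrite Hf. ring. }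
  assert (Kz : forall s, 1/2 <= s -> f (path2 x y z s) = f y + (2 * s - 1) * (f z - f y)).
  { intros s Hs. unfold path2. destruct Rle_dec.
    - assert (s = 1/2) by lra. subst. rewrite Hf. field.
    - rewrite Hf. ring. }
  assert (Bx : Rabs (f y - f x) <= L / 2) by (unfold L; pose proof (Rabs_pos (f z - f y)); lra).
  assert (Bz : Rabs (f z - f y) <= L / 2) by (unfold L; pose proof (Rabs_pos (f y - f x)); lra).
  assert (Gen : forall c s1 s2, Rabs c <= L/2 -> Rabs ((2*s1 - 1)*c - (2*s2-1)*c) <= L * Rabs (s1 - s2)).
  { intros c s1 s2 Hc. replace ((2*s1 - 1)*c - (2*s2-1)*c) with (2 * c * (s1 - s2)) by ring.
    rewrite !Rabs_mult. rewrite (Rabs_right 2) by lra. pose proof (Rabs_pos (s1 - s2)).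
    pose proof (Rabs_pos c). nra. }
  destruct (Rle_dec s0 (1/2)) as [H0|H0].
  - destruct (Req_dec s0 (1/2)) as [E|E].
    + exists 1, L. split; [lra|]. split; auto. intros s _. subst s0.
      destruct (Rle_dec s (1/2)).
      * rewrite Kx, Kx by lra. replace (f y + (2 * s - 1) * (f y - f x) - (f y + (2 * (1/2) - 1) * (f y - f x)))
          with ((2*s - 1)*(f y - f x) - (2*(1/2) - 1)*(f y - f x)) by ring. apply Gen; auto.
      * rewrite Kz, Kz by lra. replace (f y + (2 * s - 1) * (f z - f y) - (f y + (2 * (1/2) - 1) * (f z - f y)))
          with ((2*s - 1)*(f z - f y) - (2*(1/2) - 1)*(f z - f y)) by ring. apply Gen; auto.
    + exists (1/2 - s0), L. split; [lra|]. split; auto. intros s Hs.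
      assert (s <= 1/2) by (apply Rabs_def2 in Hs; lra).
      rewrite Kx, Kx by lra. replace (f y + (2 * s - 1) * (f y - f x) - (f y + (2 * s0 - 1) * (f y - f x)))
          with ((2*s - 1)*(f y - f x) - (2*s0 - 1)*(f y - f x)) by ring. apply Gen; auto.
  - exists (s0 - 1/2), L. split; [lra|]. split; auto. intros s Hs.
    assert (1/2 <= s) by (apply Rabs_def2 in Hs; lra).
    rewrite Kz, Kz by lra. replace (f y + (2 * s - 1) * (f z - f y) - (f y + (2 * s0 - 1) * (f z - f y)))
          with ((2*s - 1)*(f z - f y) - (2*s0 - 1)*(f z - f y)) by ring. apply Gen; auto.
Qed.

Lemma conn_seg2 n p a m x y z :
  (forall s, 0 <= s <= 1 -> region n p a m (seg x y s)) ->
  (forall s, 0 <= s <= 1 -> region n p a m (seg y z s)) -> conn n p a m x z.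
Proof.
  intros H1 H2. exists (path2 x y z). split; [|split; [|split]].
  - intros t _. split; apply path2_cont_coord; intros; unfold seg; simpl; ring.
  - unfold path2. destruct Rle_dec; [|lra]. unfold seg. destruct x; simpl. f_equal; ring.
  - unfold path2. destruct Rle_dec; [lra|]. unfold seg. destruct y, z; simpl. f_equal; ring.
  - intros t Ht. unfold path2. destruct Rle_dec.
    + apply H1. lra.
    + apply H2. lra.
Qed.

Lemma sum_ind (u N : nat) (c : R) (h : nat -> R) :
  sum_f_R0 (fun i => (if Nat.eqb i u then c else 0) * h i) N = if Nat.leb u N then c * h u else 0.
Proof.
  induction N.
  - change (sum_f_R0 ?f 0) with (f 0%nat). cbv beta.
    destruct (Nat.eqb 0 u) eqn:E; destruct (Nat.leb u 0) eqn:E';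
    [apply Nat.eqb_eq in E | apply Nat.eqb_eq in E | apply Nat.eqb_neq in E | apply Nat.eqb_neq in E];
    [apply Nat.leb_le in E' | apply Nat.leb_gt in E' | apply Nat.leb_le in E' | apply Nat.leb_gt in E'];
    try lia; subst; ring.
  - change (sum_f_R0 ?f (S ?N)) with (sum_f_R0 f N + f (S N)). cbv beta. rewrite IHN.
    destruct (Nat.eqb (S N) u) eqn:E; destruct (Nat.leb u N) eqn:E'; destruct (Nat.leb u (S N)) eqn:E'';
    [apply Nat.eqb_eq in E | apply Nat.eqb_eq in E | apply Nat.eqb_eq in E | apply Nat.eqb_eq in E
    |apply Nat.eqb_neq in E | apply Nat.eqb_neq in E | apply Nat.eqb_neq in E | apply Nat.eqb_neq in E];
    [apply Nat.leb_le in E' | apply Nat.leb_le in E' | apply Nat.leb_gt in E' | apply Nat.leb_gt in E'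
    |apply Nat.leb_le in E' | apply Nat.leb_le in E' | apply Nat.leb_gt in E' | apply Nat.leb_gt in E'];
    [apply Nat.leb_le in E'' | apply Nat.leb_gt in E'' | apply Nat.leb_le in E'' | apply Nat.leb_gt in E''
    |apply Nat.leb_le in E'' | apply Nat.leb_gt in E'' | apply Nat.leb_le in E'' | apply Nat.leb_gt in E''];
    try lia; subst; ring.
Qed.

Lemma sum3 (f g k h : nat -> R) N :
  sum_f_R0 (fun i => (f i + g i + k i) * h i) N =
  sum_f_R0 (fun i => f i * h i) N + sum_f_R0 (fun i => g i * h i) N + sum_f_R0 (fun i => k i * h i) N.
Proof. induction N; simpl; [ring | rewrite IHN; ring]. Qed.

Lemma inT_poly n p a m sg t q : SignHyp n p a sg -> (4 <= n)%nat -> (2 <= m)%nat -> (a < n)%nat ->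
  (1 <= t)%nat -> (t <= n - 2)%nat -> inTt n p a m t q -> in_polygon n p q.
Proof.
  intros HS Hn Hm Ha H1 H2 [HX [HY HZ]].
  pose proof (D_nz n p a sg t HS H1 H2 ltac:(lia)) as D.
  assert (Hm1 : (1 <= m)%nat) by lia. pose proof (INR_pos_m m Hm1) as Hm0.
  pose proof (lt_0_INR m ltac:(lia)) as Hmp.
  pose proof (bsum _ _ _ m q D) as Hs. pose proof (pos_bc _ _ _ m q D Hm1) as Hq.
  set (X := bx (Q n p a 0) (Q n p a t) (Q n p a (S t)) m q) in *.
  set (Y := bY (Q n p a 0) (Q n p a t) (Q n p a (S t)) m q) in *.
  set (Z := bz (Q n p a 0) (Q n p a t) (Q n p a (S t)) m q) in *.
  set (ua := a). set (ub := ((a + t) mod n)%nat). set (uc := ((a + S t) mod n)%nat).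
  assert (Hb : (ub < n)%nat) by (apply Nat.mod_upper_bound; lia).
  assert (Hc : (uc < n)%nat) by (apply Nat.mod_upper_bound; lia).
  set (lam := fun i => (if Nat.eqb i ua then X / INR m else 0) + (if Nat.eqb i ub then Y / INR m else 0)
                      + (if Nat.eqb i uc then Z / INR m else 0)).
  exists lam. split; [|split; [|split]].
  - intros i _. unfold lam.
    assert (0 <= X / INR m) by (apply Rmult_le_pos; [auto | apply Rlt_le, Rinv_0_lt_compat; auto]).
    assert (0 <= Y / INR m) by (apply Rmult_le_pos; [auto | apply Rlt_le, Rinv_0_lt_compat; auto]).
    assert (0 <= Z / INR m) by (apply Rmult_le_pos; [auto | apply Rlt_le, Rinv_0_lt_compat; auto]).
    destruct (Nat.eqb i ua), (Nat.eqb i ub), (Nat.eqb i uc); lra.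
  - transitivity (sum_f_R0 (fun i => lam i * 1) (n - 1)).
    { apply sum_eq. intros; ring. }
    unfold lam. rewrite sum3, !sum_ind.
    replace (Nat.leb ua (n-1)) with true by (symmetry; apply Nat.leb_le; unfold ua; lia).
    replace (Nat.leb ub (n-1)) with true by (symmetry; apply Nat.leb_le; lia).
    replace (Nat.leb uc (n-1)) with true by (symmetry; apply Nat.leb_le; lia).
    field_simplify; auto. rewrite Hs. field; auto.
  - unfold lam. rewrite sum3, !sum_ind.
    replace (Nat.leb ua (n-1)) with true by (symmetry; apply Nat.leb_le; unfold ua; lia).
    replace (Nat.leb ub (n-1)) with true by (symmetry; apply Nat.leb_le; lia).
    replace (Nat.leb uc (n-1)) with true by (symmetry; apply Nat.leb_le; lia).
    rewrite <- Hq at 1. unfold posT, bary. simpl. unfold ua, ub, uc. rewrite <- (Q0 n p a Ha). unfold Q.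
    field; auto.
  - unfold lam. rewrite sum3, !sum_ind.
    replace (Nat.leb ua (n-1)) with true by (symmetry; apply Nat.leb_le; unfold ua; lia).
    replace (Nat.leb ub (n-1)) with true by (symmetry; apply Nat.leb_le; lia).
    replace (Nat.leb uc (n-1)) with true by (symmetry; apply Nat.leb_le; lia).
    rewrite <- Hq at 1. unfold posT, bary. simpl. unfold ua, ub, uc. rewrite <- (Q0 n p a Ha). unfold Q.
    field; auto.
Qed.

Lemma seg_region n p a m sg t x y i j k : SignHyp n p a sg -> (4 <= n)%nat -> (2 <= m)%nat -> (a < n)%nat ->
  (1 <= t)%nat -> (t <= n - 2)%nat -> inTt n p a m t x -> inTt n p a m t y ->
  SNt n p a m t x i j k -> SNt n p a m t y i j k ->
  forall s, 0 <= s <= 1 -> region n p a m (seg x y s).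
Proof.
  intros HS Hn Hm Ha H1 H2 Ix Iy Sx Sy s Hs.
  pose proof (D_nz n p a sg t HS H1 H2 ltac:(lia)) as D.
  assert (Is : inTt n p a m t (seg x y s)) by (apply InT_seg; auto).
  assert (Ss : SNt n p a m t (seg x y s) i j k) by (apply SN_seg; auto).
  split.
  - apply (inT_poly n p a m sg t); auto.
  - apply (cell_not_graph n p a m sg (post n p a m t (INR i) (INR j) (INR k))); auto.
    apply (cell_of n p a m sg); auto.
Qed.

Lemma TR_yz n p a m sg t t' x y z x' y' z' :
  SignHyp n p a sg -> (4 <= n)%nat -> (1 <= m)%nat ->
  (1 <= t)%nat -> (t < t')%nat -> (t' <= n - 2)%nat ->
  0 <= x -> 0 <= y -> 0 <= z -> 0 <= x' -> 0 <= y' -> 0 <= z' ->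
  x + y + z = INR m -> x' + y' + z' = INR m ->
  post n p a m t x y z = post n p a m t' x' y' z' -> y = 0 /\ z' = 0.
Proof.
  intros. destruct (TR n p a m sg t t' x y z x' y' z'); auto; tauto.
Qed.

Lemma same_tri n p a m sg t t' x y z x' y' z' :
  SignHyp n p a sg -> (4 <= n)%nat -> (1 <= m)%nat ->
  (1 <= t)%nat -> (t <= n - 2)%nat -> (1 <= t')%nat -> (t' <= n - 2)%nat ->
  0 <= x -> 0 <= y -> 0 <= z -> 0 <= x' -> 0 <= y' -> 0 <= z' ->
  x + y + z = INR m -> x' + y' + z' = INR m ->
  (0 < y \/ (t' <= t)%nat) -> (0 < z \/ (t <= t')%nat) ->
  post n p a m t x y z = post n p a m t' x' y' z' -> t = t' /\ x = x' /\ y = y' /\ z = z'.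
Proof.
  intros HS Hn Hm H1 H2 H1' H2' Px Py Pz Px' Py' Pz' Hs Hs' Hy Hz E.
  destruct (Nat.lt_total t t') as [Hlt|[Heq|Hgt]].
  - destruct (TR_yz n p a m sg t t' x y z x' y' z'); auto; try lia. destruct Hy; [lra|lia].
  - subst t'. split; auto. apply (posT_inj (Q n p a 0) (Q n p a t) (Q n p a (S t)) m); auto. apply (D_nz n p a sg t); auto; lia.
  - destruct (TR_yz n p a m sg t' t x' y' z' x y z); auto; try lia. destruct Hz; [lra|lia].
Qed.

Lemma INR_half_inj i j : INR i + /2 = INR j + /2 -> i = j.
Proof. intros. apply INR_eq. lra. Qed.
Lemma INR_third_inj i j : INR i + /3 = INR j + /3 -> i = j.
Proof. intros. apply INR_eq. lra. Qed.

Lemma sum_m1 i j k m : (2 <= m)%nat -> (i + j + k = m - 1)%nat -> INR i + INR j + INR k + 1 = INR m.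
Proof. intros Hm H. rewrite (INR_sum3 i j k (m-1)) by auto. rewrite minus_INR by lia. simpl. lra. Qed.
Lemma sum_m2 i j k m : (2 <= m)%nat -> (i + j + k = m - 2)%nat -> INR i + INR j + INR k + 2 = INR m.
Proof. intros Hm H. rewrite (INR_sum3 i j k (m-2)) by auto. rewrite minus_INR by lia. simpl. lra. Qed.

Lemma sAB_sAC n p a m t i j :
  sideAB_node (Q n p a 0) (Q n p a (S t)) (Q n p a (S (S t))) m i j =
  sideAC_node (Q n p a 0) (Q n p a t) (Q n p a (S t)) m i j.
Proof. unfold sideAB_node, sideAC_node, bary. f_equal; unfold Rdiv; ring. Qed.

Lemma BA_char n p a m sg w b : SignHyp n p a sg -> (4 <= n)%nat -> (2 <= m)%nat -> (a < n)%nat ->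
  boundary_arrow n p a m w b ->
  exists t, (1 <= t)%nat /\ (t <= n - 2)%nat /\
   ((exists j k, (j + k = m - 1)%nat /\ w = white_node (Q n p a 0) (Q n p a t) (Q n p a (S t)) m 0 j k /\
                 b = sideBC_node (Q n p a 0) (Q n p a t) (Q n p a (S t)) m j k) \/
    (t = 1%nat /\ exists i j, (i + j = m - 1)%nat /\ w = white_node (Q n p a 0) (Q n p a t) (Q n p a (S t)) m i j 0 /\
                 b = sideAB_node (Q n p a 0) (Q n p a t) (Q n p a (S t)) m i j) \/
    (t = (n - 2)%nat /\ exists i k, (i + k = m - 1)%nat /\ w = white_node (Q n p a 0) (Q n p a t) (Q n p a (S t)) m i 0 k /\
                 b = sideAC_node (Q n p a 0) (Q n p a t) (Q n p a (S t)) m i k)).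
Proof.
  intros HS Hn Hm Ha [Hd Hu].
  assert (Hm1 : (1 <= m)%nat) by lia.
  pose proof Hd as Hd'. apply dimer_edge_iff in Hd'; auto.
  destruct Hd' as [t [H1 [H2 [i [j [k [Hs [Hw Hcase]]]]]]]].
  exists t. split; auto. split; auto.
  destruct Hcase as [[i' [j' [k' [Hs' [Hc Hb]]]]] | [[Hk Hb] | [[Hj Hb] | [Hi Hb]]]].
  - exfalso.
    assert (E1 : white_node (Q n p a 0) (Q n p a t) (Q n p a (S t)) m (S i') j' k' = w).
    { apply Hu. apply dimer_edge_iff; auto. exists t. split; auto. split; auto.
      exists (S i'), j', k'. split; [lia|]. split; [reflexivity|]. left. exists i', j', k'.
      split; [exact Hs'|split; [left; auto|exact Hb]]. }
    assert (E2 : white_node (Q n p a 0) (Q n p a t) (Q n p a (S t)) m i' (S j') k' = w).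
    { apply Hu. apply dimer_edge_iff; auto. exists t. split; auto. split; auto.
      exists i', (S j'), k'. split; [lia|]. split; [reflexivity|]. left. exists i', j', k'.
      split; [exact Hs'|split; [right; left; auto|exact Hb]]. }
    rewrite <- E2 in E1. rewrite !white_pos in E1 by auto.
    pose proof (sum_m2 i' j' k' m Hm Hs').
    apply posT_inj in E1; [| apply (D_nz n p a sg t); auto; lia | auto | rewrite S_INR; lra | rewrite S_INR; lra].
    destruct E1 as [E _]. rewrite S_INR in E. lra.
  - subst k. destruct (Nat.eq_dec t 1) as [->|Ht1].
    + right; left. split; auto. exists i, j. split; [lia|]. split; auto.
    + exfalso. destruct t as [|t0]; [lia|].
      assert (E1 : white_node (Q n p a 0) (Q n p a t0) (Q n p a (S t0)) m i 0 j = w).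
      { apply Hu. apply dimer_edge_iff; auto. exists t0. split; [lia|]. split; [lia|].
        exists i, 0%nat, j. split; [lia|]. split; [reflexivity|]. right; right; left. split; auto.
        rewrite Hb. apply sAB_sAC. }
      rewrite Hw in E1. rewrite !white_pos in E1 by auto. simpl INR in E1.
      pose proof (sum_m1 i j 0 m Hm Hs). simpl INR in H.
      pose proof (pos_INR i); pose proof (pos_INR j).
      destruct (TR_yz n p a m sg t0 (S t0) (INR i + /3) (0 + /3) (INR j + /3) (INR i + /3) (INR j + /3) (0 + /3)
        HS Hn Hm1 ltac:(lia) ltac:(lia) ltac:(lia)); try lra. exact E1.
  - subst j. destruct (Nat.eq_dec t (n - 2)) as [->|Ht1].
    + right; right. split; auto. exists i, k. split; [lia|]. split; auto.
    + exfalso.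
      assert (E1 : white_node (Q n p a 0) (Q n p a (S t)) (Q n p a (S (S t))) m i k 0 = w).
      { apply Hu. apply dimer_edge_iff; auto. exists (S t). split; [lia|]. split; [lia|].
        exists i, k, 0%nat. split; [lia|]. split; [reflexivity|]. right; left. split; auto.
        rewrite Hb. symmetry. apply sAB_sAC. }
      rewrite Hw in E1. rewrite !white_pos in E1 by auto. simpl INR in E1.
      pose proof (sum_m1 i 0 k m Hm Hs). simpl INR in H.
      pose proof (pos_INR i); pose proof (pos_INR k).
      destruct (TR_yz n p a m sg t (S t) (INR i + /3) (0 + /3) (INR k + /3) (INR i + /3) (INR k + /3) (0 + /3)
        HS Hn Hm1 ltac:(lia) ltac:(lia) ltac:(lia)); try lra. symmetry. exact E1.
  - subst i. left. exists j, k. split; [lia|]. split; auto.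
Qed.

Ltac node_cases Hcase Hb Hs' :=
  let i'' := fresh "i''" in let j'' := fresh "j''" in let k'' := fresh "k''" in
  let Hs'' := fresh "Hs''" in let Hc := fresh "Hc" in let Hbb := fresh "Hbb" in
  let Hk := fresh "Hk" in
  destruct Hcase as [[i'' [j'' [k'' [Hs'' [Hc Hbb]]]]] | [[Hk Hbb] | [[Hk Hbb] | [Hk Hbb]]]];
  rewrite Hbb in Hb.

Lemma BA_BC n p a m sg t j k : SignHyp n p a sg -> (4 <= n)%nat -> (2 <= m)%nat -> (a < n)%nat ->
  (1 <= t)%nat -> (t <= n - 2)%nat -> (j + k = m - 1)%nat ->
  boundary_arrow n p a m (white_node (Q n p a 0) (Q n p a t) (Q n p a (S t)) m 0 j k)
                          (sideBC_node (Q n p a 0) (Q n p a t) (Q n p a (S t)) m j k).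
Proof.
  intros HS Hn Hm Ha H1 H2 Hjk. assert (Hm1 : (1 <= m)%nat) by lia.
  pose proof (sum_m1 0 j k m Hm ltac:(lia)) as Sm. simpl INR in Sm.
  pose proof (pos_INR j); pose proof (pos_INR k).
  split.
  - apply dimer_edge_iff; auto. exists t. split; auto. split; auto.
    exists 0%nat, j, k. split; [lia|]. split; [reflexivity|]. right; right; right. split; auto.
  - intros w' Hd. apply dimer_edge_iff in Hd; auto.
    destruct Hd as [t' [H1' [H2' [i' [j' [k' [Hs' [Hw' Hcase]]]]]]]].
    remember (sideBC_node (Q n p a 0) (Q n p a t) (Q n p a (S t)) m j k) as b eqn:Hb.
    rewrite sBC_pos in Hb by auto.
    node_cases Hcase Hb Hs'.
    + rewrite down_pos in Hb by auto. pose proof (sum_m2 i'' j'' k'' m Hm Hs'').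
      pose proof (pos_INR i''); pose proof (pos_INR j''); pose proof (pos_INR k'').
      destruct (same_tri n p a m sg t t' 0 (INR j + /2) (INR k + /2) (INR i'' + 2/3) (INR j'' + 2/3) (INR k'' + 2/3)
        HS Hn Hm1 H1 H2 H1' H2'); try lra. exact (eq_sym Hb).
    + subst k'. rewrite sAB_pos in Hb by auto. pose proof (sum_m1 i' j' 0 m Hm Hs'). simpl INR in *.
      pose proof (pos_INR i'); pose proof (pos_INR j').
      destruct (same_tri n p a m sg t t' 0 (INR j + /2) (INR k + /2) (INR i' + /2) (INR j' + /2) 0
        HS Hn Hm1 H1 H2 H1' H2'); try lra. exact (eq_sym Hb).
    + subst j'. rewrite sAC_pos in Hb by auto. pose proof (sum_m1 i' 0 k' m Hm Hs'). simpl INR in *.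
      pose proof (pos_INR i'); pose proof (pos_INR k').
      destruct (same_tri n p a m sg t t' 0 (INR j + /2) (INR k + /2) (INR i' + /2) 0 (INR k' + /2)
        HS Hn Hm1 H1 H2 H1' H2'); try lra. exact (eq_sym Hb).
    + subst i'. rewrite sBC_pos in Hb by auto. pose proof (sum_m1 0 j' k' m Hm Hs'). simpl INR in *.
      pose proof (pos_INR j'); pose proof (pos_INR k').
      destruct (same_tri n p a m sg t t' 0 (INR j + /2) (INR k + /2) 0 (INR j' + /2) (INR k' + /2)
        HS Hn Hm1 H1 H2 H1' H2') as [Et [_ [Ej Ek]]]; try lra. exact (eq_sym Hb).
      apply INR_half_inj in Ej. apply INR_half_inj in Ek. subst. reflexivity.
Qed.

Lemma BA_AB1 n p a m sg t i j : SignHyp n p a sg -> (4 <= n)%nat -> (2 <= m)%nat -> (a < n)%nat ->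
  t = 1%nat -> (i + j = m - 1)%nat ->
  boundary_arrow n p a m (white_node (Q n p a 0) (Q n p a t) (Q n p a (S t)) m i j 0)
                          (sideAB_node (Q n p a 0) (Q n p a t) (Q n p a (S t)) m i j).
Proof.
  intros HS Hn Hm Ha Ht Hij. assert (Hm1 : (1 <= m)%nat) by lia.
  assert (H1 : (1 <= t)%nat) by lia. assert (H2 : (t <= n - 2)%nat) by lia.
  pose proof (sum_m1 i j 0 m Hm ltac:(lia)) as Sm. simpl INR in Sm.
  pose proof (pos_INR i); pose proof (pos_INR j).
  split.
  - apply dimer_edge_iff; auto. exists t. split; auto. split; auto.
    exists i, j, 0%nat. split; [lia|]. split; [reflexivity|]. right; left. split; auto.
  - intros w' Hd. apply dimer_edge_iff in Hd; auto.
    destruct Hd as [t' [H1' [H2' [i' [j' [k' [Hs' [Hw' Hcase]]]]]]]].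
    remember (sideAB_node (Q n p a 0) (Q n p a t) (Q n p a (S t)) m i j) as b eqn:Hb.
    rewrite sAB_pos in Hb by auto.
    node_cases Hcase Hb Hs'.
    + rewrite down_pos in Hb by auto. pose proof (sum_m2 i'' j'' k'' m Hm Hs'').
      pose proof (pos_INR i''); pose proof (pos_INR j''); pose proof (pos_INR k'').
      destruct (same_tri n p a m sg t t' (INR i + /2) (INR j + /2) 0 (INR i'' + 2/3) (INR j'' + 2/3) (INR k'' + 2/3)
        HS Hn Hm1 H1 H2 H1' H2'); try lra; try lia. exact (eq_sym Hb).
    + subst k'. rewrite sAB_pos in Hb by auto. pose proof (sum_m1 i' j' 0 m Hm Hs'). simpl INR in *.
      pose proof (pos_INR i'); pose proof (pos_INR j').
      destruct (same_tri n p a m sg t t' (INR i + /2) (INR j + /2) 0 (INR i' + /2) (INR j' + /2) 0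
        HS Hn Hm1 H1 H2 H1' H2') as [Et [Ei [Ej _]]]; try lra; try lia. exact (eq_sym Hb).
      apply INR_half_inj in Ei. apply INR_half_inj in Ej. subst. reflexivity.
    + subst j'. rewrite sAC_pos in Hb by auto. pose proof (sum_m1 i' 0 k' m Hm Hs'). simpl INR in *.
      pose proof (pos_INR i'); pose proof (pos_INR k').
      destruct (same_tri n p a m sg t t' (INR i + /2) (INR j + /2) 0 (INR i' + /2) 0 (INR k' + /2)
        HS Hn Hm1 H1 H2 H1' H2'); try lra; try lia. exact (eq_sym Hb).
    + subst i'. rewrite sBC_pos in Hb by auto. pose proof (sum_m1 0 j' k' m Hm Hs'). simpl INR in *.
      pose proof (pos_INR j'); pose proof (pos_INR k').
      destruct (same_tri n p a m sg t t' (INR i + /2) (INR j + /2) 0 0 (INR j' + /2) (INR k' + /2)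
        HS Hn Hm1 H1 H2 H1' H2'); try lra; try lia. exact (eq_sym Hb).
Qed.

Lemma BA_ACn n p a m sg t i k : SignHyp n p a sg -> (4 <= n)%nat -> (2 <= m)%nat -> (a < n)%nat ->
  t = (n - 2)%nat -> (i + k = m - 1)%nat ->
  boundary_arrow n p a m (white_node (Q n p a 0) (Q n p a t) (Q n p a (S t)) m i 0 k)
                          (sideAC_node (Q n p a 0) (Q n p a t) (Q n p a (S t)) m i k).
Proof.
  intros HS Hn Hm Ha Ht Hik. assert (Hm1 : (1 <= m)%nat) by lia.
  assert (H1 : (1 <= t)%nat) by lia. assert (H2 : (t <= n - 2)%nat) by lia.
  pose proof (sum_m1 i 0 k m Hm ltac:(lia)) as Sm. simpl INR in Sm.
  pose proof (pos_INR i); pose proof (pos_INR k).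
  split.
  - apply dimer_edge_iff; auto. exists t. split; auto. split; auto.
    exists i, 0%nat, k. split; [lia|]. split; [reflexivity|]. right; right; left. split; auto.
  - intros w' Hd. apply dimer_edge_iff in Hd; auto.
    destruct Hd as [t' [H1' [H2' [i' [j' [k' [Hs' [Hw' Hcase]]]]]]]].
    remember (sideAC_node (Q n p a 0) (Q n p a t) (Q n p a (S t)) m i k) as b eqn:Hb.
    rewrite sAC_pos in Hb by auto.
    node_cases Hcase Hb Hs'.
    + rewrite down_pos in Hb by auto. pose proof (sum_m2 i'' j'' k'' m Hm Hs'').
      pose proof (pos_INR i''); pose proof (pos_INR j''); pose proof (pos_INR k'').
      destruct (same_tri n p a m sg t t' (INR i + /2) 0 (INR k + /2) (INR i'' + 2/3) (INR j'' + 2/3) (INR k'' + 2/3)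
        HS Hn Hm1 H1 H2 H1' H2'); try lra; try lia. exact (eq_sym Hb).
    + subst k'. rewrite sAB_pos in Hb by auto. pose proof (sum_m1 i' j' 0 m Hm Hs'). simpl INR in *.
      pose proof (pos_INR i'); pose proof (pos_INR j').
      destruct (same_tri n p a m sg t t' (INR i + /2) 0 (INR k + /2) (INR i' + /2) (INR j' + /2) 0
        HS Hn Hm1 H1 H2 H1' H2'); try lra; try lia. exact (eq_sym Hb).
    + subst j'. rewrite sAC_pos in Hb by auto. pose proof (sum_m1 i' 0 k' m Hm Hs'). simpl INR in *.
      pose proof (pos_INR i'); pose proof (pos_INR k').
      destruct (same_tri n p a m sg t t' (INR i + /2) 0 (INR k + /2) (INR i' + /2) 0 (INR k' + /2)
        HS Hn Hm1 H1 H2 H1' H2') as [Et [Ei [_ Ek]]]; try lra; try lia. exact (eq_sym Hb).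
      apply INR_half_inj in Ei. apply INR_half_inj in Ek. subst. reflexivity.
    + subst i'. rewrite sBC_pos in Hb by auto. pose proof (sum_m1 0 j' k' m Hm Hs'). simpl INR in *.
      pose proof (pos_INR j'); pose proof (pos_INR k').
      destruct (same_tri n p a m sg t t' (INR i + /2) 0 (INR k + /2) 0 (INR j' + /2) (INR k' + /2)
        HS Hn Hm1 H1 H2 H1' H2'); try lra; try lia. exact (eq_sym Hb).
Qed.

Fixpoint tri_list (N : nat) : list (nat * nat * nat) :=
  match N with
  | O => [(0%nat, 0%nat, 0%nat)]
  | S N' => map (fun e => match e with (x, y, z) => (S x, y, z) end) (tri_list N') ++
            map (fun y => (0%nat, y, (N' + 1 - y)%nat)) (seq 0 (S (S N')))
  end.

Lemma tri_list_S N : tri_list (S N) = map (fun e => match e with (x, y, z) => (S x, y, z) end) (tri_list N) ++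
            map (fun y => (0%nat, y, (N + 1 - y)%nat)) (seq 0 (S (S N))).
Proof. reflexivity. Qed.

Lemma tri_list_in N x y z : In (x, y, z) (tri_list N) <-> (x + y + z = N)%nat.
Proof.
  revert x y z. induction N; intros x y z.
  - simpl. split. intros [E|[]]. injection E; intros; lia.
    intros H. left. (apply pair_equal_spec; split; [apply pair_equal_spec; split|]; lia).
  - rewrite tri_list_S, in_app_iff, !in_map_iff. split.
    + intros [[[[x' y'] z'] [E Hin]] | [y' [E Hin]]].
      * simpl in E. injection E; intros; subst. apply IHN in Hin. lia.
      * injection E; intros; subst. apply in_seq in Hin. lia.
    + intros H. destruct x as [|x].
      * right. exists y. split. (apply pair_equal_spec; split; [apply pair_equal_spec; split|]; lia). apply in_seq. lia.
      * left. exists (x, y, z). split; auto. apply IHN. lia.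
Qed.

Lemma tri_list_nodup N : NoDup (tri_list N).
Proof.
  induction N.
  - simpl. constructor; [intros []|constructor].
  - rewrite tri_list_S. apply NoDup_app.
    + apply NoDup_map_NoDup_ForallPairs; auto.
      intros [[x y] z] [[x' y'] z'] _ _ E. injection E; intros; subst. reflexivity.
    + apply NoDup_map_NoDup_ForallPairs; [|apply seq_NoDup].
      intros y y' _ _ E. injection E; intros; auto.
    + intros e H1 H2. apply in_map_iff in H1. apply in_map_iff in H2.
      destruct H1 as [[[x y] z] [E1 _]]. destruct H2 as [y' [E2 _]]. subst. discriminate.
Qed.

Lemma tri_list_len N : (2 * length (tri_list N) = (N + 1) * (N + 2))%nat.
Proof.
  induction N; [simpl; auto|].
  rewrite tri_list_S, length_app, !length_map, length_seq. simpl length in IHN. lia.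
Qed.

Definition LA (m : nat) := map (fun e => match e with (x, y, z) => (S x, y, S z) end) (tri_list (m - 2)).
Definition LB (m : nat) := if Nat.leb 3 m then
   map (fun e => match e with (x, y, z) => (S x, S y, S z) end) (tri_list (m - 3)) else [].
Definition lidx (n m : nat) := list_prod (seq 1 (n - 3)) (LA m) ++ map (pair (n - 2)%nat) (LB m).

Definition RepCond (n m : nat) (e : nat * (nat * nat * nat)) : Prop :=
  match e with (t, (i, j, k)) =>
    (1 <= t)%nat /\ (t <= n - 2)%nat /\ (i + j + k = m)%nat /\ (1 <= i)%nat /\ (1 <= k)%nat /\
    ((1 <= j)%nat \/ (t <= n - 3)%nat) end.

Lemma lidx_in n m e : (4 <= n)%nat -> (2 <= m)%nat -> In e (lidx n m) <-> RepCond n m e.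
Proof.
  intros Hn Hm. destruct e as [t [[i j] k]]. unfold lidx, RepCond.
  rewrite in_app_iff, in_prod_iff, in_map_iff, in_seq. unfold LA, LB. rewrite in_map_iff. split.
  - intros [[Ht [[[x y] z] [E Hin]]] | [e' [E Hin]]].
    + injection E; intros; subst. apply tri_list_in in Hin. lia.
    + destruct (Nat.leb 3 m) eqn:Hb; [|destruct Hin].
      apply in_map_iff in Hin. destruct Hin as [[[x y] z] [E' Hin]].
      injection E; intros; subst. injection H; intros; subst.
      apply tri_list_in in Hin. apply Nat.leb_le in Hb. lia.
  - intros [H1 [H2 [H3 [H4 [H5 H6]]]]].
    destruct (Nat.le_gt_cases t (n - 3)) as [Ht|Ht].
    + left. split; [lia|]. exists (i - 1, j, k - 1)%nat. split. (apply pair_equal_spec; split; [apply pair_equal_spec; split|]; lia).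
      apply tri_list_in. lia.
    + right. exists (i, j, k). split. (f_equal; lia).
      assert (Hb : Nat.leb 3 m = true) by (apply Nat.leb_le; lia). rewrite Hb.
      apply in_map_iff. exists (i - 1, j - 1, k - 1)%nat. split. (apply pair_equal_spec; split; [apply pair_equal_spec; split|]; lia).
      apply tri_list_in. lia.
Qed.

Lemma NoDup_prod {A B : Type} (l : list A) (l' : list B) : NoDup l -> NoDup l' -> NoDup (list_prod l l').
Proof.
  induction l as [|x l IHl]; intros H H'; simpl; [constructor|].
  inversion H as [|x0 l0 Hx Hl E]; subst. apply NoDup_app.
  - apply NoDup_map_NoDup_ForallPairs; auto. intros u v _ _ E0. injection E0; auto.
  - apply IHl; auto.
  - intros e G1 G2. apply in_map_iff in G1. destruct G1 as [y [E0 _]]. subst.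
    apply in_prod_iff in G2. tauto.
Qed.

Lemma lidx_nodup n m : NoDup (lidx n m).
Proof.
  unfold lidx. apply NoDup_app.
  - apply NoDup_prod; [apply seq_NoDup|]. unfold LA. apply NoDup_map_NoDup_ForallPairs; [|apply tri_list_nodup].
    intros [[x y] z] [[x' y'] z'] _ _ E. injection E; intros; subst. reflexivity.
  - apply NoDup_map_NoDup_ForallPairs; [intros x y _ _ E; injection E; auto|].
    unfold LB. destruct (Nat.leb 3 m); [|constructor].
    apply NoDup_map_NoDup_ForallPairs; [|apply tri_list_nodup].
    intros [[x y] z] [[x' y'] z'] _ _ E. injection E; intros; subst. reflexivity.
  - intros [t τ] H1 H2. apply in_prod_iff in H1. destruct H1 as [H1 _]. apply in_seq in H1.
    apply in_map_iff in H2. destruct H2 as [x [E _]]. injection E; intros; subst. lia.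
Qed.

Lemma lidx_len n m : (4 <= n)%nat -> (2 <= m)%nat ->
  (2 * length (lidx n m) = (n - 3) * (m * (m - 1)) + (m - 1) * (m - 2))%nat.
Proof.
  intros Hn Hm. unfold lidx, LA, LB. rewrite length_app, length_prod, length_seq, !length_map.
  pose proof (tri_list_len (m - 2)) as H1.
  destruct (Nat.leb 3 m) eqn:Hb.
  - apply Nat.leb_le in Hb. rewrite length_map. pose proof (tri_list_len (m - 3)) as H2.
    replace (m - 2 + 1)%nat with (m - 1)%nat in H1 by lia. replace (m - 2 + 2)%nat with m in H1 by lia.
    replace (m - 3 + 1)%nat with (m - 2)%nat in H2 by lia. replace (m - 3 + 2)%nat with (m - 1)%nat in H2 by lia.
    nia.
  - apply Nat.leb_gt in Hb. simpl. assert (m = 2%nat) by lia. subst. simpl in *. lia.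
Qed.

Definition rpos n p a m (e : nat * (nat * nat * nat)) : pt :=
  match e with (t, (i, j, k)) => post n p a m t (INR i) (INR j) (INR k) end.

Lemma lat_SN n p a m sg t i j k : SignHyp n p a sg -> (4 <= n)%nat -> (2 <= m)%nat ->
  (1 <= t)%nat -> (t <= n - 2)%nat -> (i + j + k = m)%nat ->
  inTt n p a m t (post n p a m t (INR i) (INR j) (INR k)) /\
  SNt n p a m t (post n p a m t (INR i) (INR j) (INR k)) i j k.
Proof.
  intros HS Hn Hm H1 H2 Hs. assert (Hm1 : (1 <= m)%nat) by lia.
  pose proof (D_nz n p a sg t HS H1 H2 ltac:(lia)) as D.
  pose proof (INR_sum3 i j k m Hs).
  pose proof (pos_INR i); pose proof (pos_INR j); pose proof (pos_INR k).
  unfold inTt, SNt, InT, SN, SNc, post. rewrite bc_pos_x, bc_pos_y, bc_pos_z by auto.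
  split. split; [lra|split; lra]. split; auto. repeat split; lra.
Qed.

Lemma INR_zero_nat i : INR i = 0 -> i = 0%nat.
Proof. intros. apply INR_eq. simpl. auto. Qed.

Lemma rep_not_bd n p a m sg t i j k t' i' j' k' : SignHyp n p a sg -> (4 <= n)%nat -> (2 <= m)%nat ->
  RepCond n m (t, (i, j, k)) -> (1 <= t')%nat -> (t' <= n - 2)%nat -> (i' + j' + k' = m)%nat ->
  (i' = 0%nat \/ (t' = 1%nat /\ k' = 0%nat) \/ (t' = (n - 2)%nat /\ j' = 0%nat)) ->
  post n p a m t (INR i) (INR j) (INR k) <> post n p a m t' (INR i') (INR j') (INR k').
Proof.
  intros HS Hn Hm [H1 [H2 [Hs [Hi [Hk Hj]]]]] H1' H2' Hs' Hbd E.
  assert (Hm1 : (1 <= m)%nat) by lia.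
  pose proof (INR_sum3 i j k m Hs). pose proof (INR_sum3 i' j' k' m Hs').
  pose proof (pos_INR i); pose proof (pos_INR j); pose proof (pos_INR k).
  pose proof (pos_INR i'); pose proof (pos_INR j'); pose proof (pos_INR k').
  destruct (Nat.lt_total t t') as [Hlt|[Heq|Hgt]].
  - destruct (TR n p a m sg t t' (INR i) (INR j) (INR k) (INR i') (INR j') (INR k') HS Hn Hm1 H1 Hlt H2'
       ltac:(auto) ltac:(auto) ltac:(auto) ltac:(auto) ltac:(auto) ltac:(auto) H H0 E)
      as [[Ht [Ej [Ek' [Ei Ek]]]] | [_ [_ [Ek _]]]].
    + apply INR_eq in Ei. apply INR_eq in Ek. apply INR_zero_nat in Ej. lia.
    + apply INR_zero_nat in Ek. lia.
  - subst t'. pose proof (D_nz n p a sg t HS H1 H2 ltac:(lia)) as D.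
    destruct (posT_inj _ _ _ m _ _ _ _ _ _ D Hm1 H H0 E) as [Ei [Ej Ek]].
    apply INR_eq in Ei. apply INR_eq in Ej. apply INR_eq in Ek. lia.
  - destruct (TR n p a m sg t' t (INR i') (INR j') (INR k') (INR i) (INR j) (INR k) HS Hn Hm1 H1' Hgt H2
       ltac:(auto) ltac:(auto) ltac:(auto) ltac:(auto) ltac:(auto) ltac:(auto) H0 H (eq_sym E))
      as [[Ht [Ej [Ek' [Ei Ek]]]] | [_ [_ [_ [_ [_ Ek]]]]]].
    + apply INR_zero_nat in Ek'. lia.
    + apply INR_zero_nat in Ek. lia.
Qed.

Lemma rep_distinct n p a m sg e1 e2 : SignHyp n p a sg -> (4 <= n)%nat -> (2 <= m)%nat ->
  RepCond n m e1 -> RepCond n m e2 -> rpos n p a m e1 = rpos n p a m e2 -> e1 = e2.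
Proof.
  intros HS Hn Hm. destruct e1 as [t [[i j] k]]. destruct e2 as [t' [[i' j'] k']].
  intros [H1 [H2 [Hs [Hi [Hk Hj]]]]] [H1' [H2' [Hs' [Hi' [Hk' Hj']]]]] E. simpl in E.
  assert (Hm1 : (1 <= m)%nat) by lia.
  pose proof (INR_sum3 i j k m Hs). pose proof (INR_sum3 i' j' k' m Hs').
  pose proof (pos_INR i); pose proof (pos_INR j); pose proof (pos_INR k).
  pose proof (pos_INR i'); pose proof (pos_INR j'); pose proof (pos_INR k').
  destruct (Nat.lt_total t t') as [Hlt|[Heq|Hgt]].
  - exfalso. destruct (TR_yz n p a m sg t t' (INR i) (INR j) (INR k) (INR i') (INR j') (INR k') HS Hn Hm1 H1 Hlt H2'
       ltac:(auto) ltac:(auto) ltac:(auto) ltac:(auto) ltac:(auto) ltac:(auto) H H0 E) as [_ Ek].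
    apply INR_zero_nat in Ek. lia.
  - subst t'. pose proof (D_nz n p a sg t HS H1 H2 ltac:(lia)) as D.
    destruct (posT_inj _ _ _ m _ _ _ _ _ _ D Hm1 H H0 E) as [Ei [Ej Ek]].
    apply INR_eq in Ei. apply INR_eq in Ej. apply INR_eq in Ek. subst. reflexivity.
  - exfalso. destruct (TR_yz n p a m sg t' t (INR i') (INR j') (INR k') (INR i) (INR j) (INR k) HS Hn Hm1 H1' Hgt H2
       ltac:(auto) ltac:(auto) ltac:(auto) ltac:(auto) ltac:(auto) ltac:(auto) H0 H (eq_sym E)) as [_ Ek].
    apply INR_zero_nat in Ek. lia.
Qed.

Lemma pt_region n p a m sg t x i j k : SignHyp n p a sg -> (4 <= n)%nat -> (2 <= m)%nat -> (a < n)%nat ->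
  (1 <= t)%nat -> (t <= n - 2)%nat -> inTt n p a m t x -> SNt n p a m t x i j k -> region n p a m x.
Proof.
  intros HS Hn Hm Ha H1 H2 Ix Sx. split.
  - apply (inT_poly n p a m sg t); auto.
  - apply (cell_not_graph n p a m sg (post n p a m t (INR i) (INR j) (INR k))); auto.
    apply (cell_of n p a m sg); auto.
Qed.

Lemma conn_in_tri n p a m sg t x y i j k : SignHyp n p a sg -> (4 <= n)%nat -> (2 <= m)%nat -> (a < n)%nat ->
  (1 <= t)%nat -> (t <= n - 2)%nat -> inTt n p a m t x -> inTt n p a m t y ->
  SNt n p a m t x i j k -> SNt n p a m t y i j k -> conn n p a m x y.
Proof.
  intros. apply conn_seg. apply (seg_region n p a m sg t x y i j k); auto.
Qed.

Lemma ae_intro n p a m sg0 t q w b sg i j k : SignHyp n p a sg0 -> (4 <= n)%nat -> (2 <= m)%nat -> (a < n)%nat ->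
  (1 <= t)%nat -> (t <= n - 2)%nat -> inTt n p a m t q -> SNt n p a m t q i j k ->
  (exists e0, 0 < e0 /\ forall eps, 0 < eps < e0 ->
     inTt n p a m t (Xeps w b sg eps) /\ SNt n p a m t (Xeps w b sg eps) i j k) ->
  arrow_end n p a m sg w b q.
Proof.
  intros HS Hn Hm Ha H1 H2 Iq Sq [e0 [He0 P]]. unfold arrow_end. cbv zeta.
  exists e0. split; auto. intros eps Heps. destruct (P eps Heps) as [IX SX].
  split.
  - apply (pt_region n p a m sg0 t _ i j k); auto.
  - apply (conn_in_tri n p a m sg0 t q _ i j k); auto.
Qed.

Lemma ae_intro_apex n p a m sg0 t q w b sg : SignHyp n p a sg0 -> (4 <= n)%nat -> (2 <= m)%nat -> (a < n)%nat ->
  (1 <= t)%nat -> (t <= n - 2)%nat -> inTt n p a m t q -> SNt n p a m t q m 0 0 ->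
  (exists e0, 0 < e0 /\ forall eps, 0 < eps < e0 ->
     inTt n p a m 1 (Xeps w b sg eps) /\ SNt n p a m 1 (Xeps w b sg eps) m 0 0) ->
  arrow_end n p a m sg w b q.
Proof.
  intros HS Hn Hm Ha H1 H2 Iq Sq [e0 [He0 P]]. unfold arrow_end. cbv zeta.
  exists e0. split; auto. intros eps Heps. destruct (P eps Heps) as [IX SX].
  assert (Hm1 : (1 <= m)%nat) by lia.
  destruct (lat_SN n p a m sg0 t m 0 0 HS Hn Hm H1 H2 ltac:(lia)) as [IA SA].
  destruct (lat_SN n p a m sg0 1 m 0 0 HS Hn Hm ltac:(lia) ltac:(lia) ltac:(lia)) as [IA1 SA1].
  simpl INR in *. rewrite (post_apex n p a m 1 t Hm1) in IA1, SA1.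
  split.
  - apply (pt_region n p a m sg0 1 _ m 0 0); auto; lia.
  - apply (conn_seg2 n p a m q (post n p a m t (INR m) 0 0) _).
    + apply (seg_region n p a m sg0 t _ _ m 0 0); auto.
    + apply (seg_region n p a m sg0 1 _ _ m 0 0); auto; lia.
Qed.

Lemma arrow_contra n p a m sg0 t w b r sg i1 j1 k1 i2 j2 k2 :
  SignHyp n p a sg0 -> (4 <= n)%nat -> (2 <= m)%nat -> (a < n)%nat -> (1 <= t)%nat -> (t <= n - 2)%nat ->
  Cell n p a m r r -> (sg = 1 \/ sg = -1) ->
  (exists kap, kap <> 0 /\ forall sg, (sg = 1 \/ sg = -1) -> exists eps0, 0 < eps0 /\
    forall eps, 0 < eps < eps0 ->
      InT (Q n p a 0) (Q n p a t) (Q n p a (S t)) m (Xeps w b sg eps) /\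
      (sg * kap > 0 -> SN (Q n p a 0) (Q n p a t) (Q n p a (S t)) m (Xeps w b sg eps) i1 j1 k1) /\
      (sg * kap < 0 -> SN (Q n p a 0) (Q n p a t) (Q n p a (S t)) m (Xeps w b sg eps) i2 j2 k2)) ->
  r <> post n p a m t (INR i1) (INR j1) (INR k1) -> r <> post n p a m t (INR i2) (INR j2) (INR k2) ->
  arrow_end n p a m sg w b r -> False.
Proof.
  intros HS Hn Hm Ha H1 H2 Hr Hsg [kap [Hk P]] N1 N2 HA.
  destruct (P sg Hsg) as [e0 [He0 P0]].
  unfold arrow_end in HA. cbv zeta in HA. destruct HA as [e1 [He1 HA]].
  set (eps := Rmin e0 e1 / 2).
  assert (Heps0 : 0 < eps) by (unfold eps; pose proof (Rmin_pos e0 e1 He0 He1); lra).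
  assert (Heps1 : eps < e0) by (unfold eps; pose proof (Rmin_l e0 e1); pose proof (Rmin_pos e0 e1 He0 He1); lra).
  assert (Heps2 : eps < e1) by (unfold eps; pose proof (Rmin_r e0 e1); pose proof (Rmin_pos e0 e1 He0 He1); lra).
  destruct (P0 eps (conj Heps0 Heps1)) as [IX [S1 S2]].
  destruct (HA eps (conj Heps0 Heps2)) as [RX CX].
  change ((fst w + fst b) / 2 + sg * eps * - (snd b - snd w), (snd w + snd b) / 2 + sg * eps * (fst b - fst w))
    with (Xeps w b sg eps) in CX.
  pose proof (conn_cell n p a m sg0 r r _ HS Hn Hm Ha CX Hr) as HC.
  destruct (HC t H1 H2 IX) as [i [j [k [HSN Er]]]].
  pose proof (D_nz n p a sg0 t HS H1 H2 ltac:(lia)) as D.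
  assert (Hs : bx (Q n p a 0) (Q n p a t) (Q n p a (S t)) m (Xeps w b sg eps) +
               bY (Q n p a 0) (Q n p a t) (Q n p a (S t)) m (Xeps w b sg eps) +
               bz (Q n p a 0) (Q n p a t) (Q n p a (S t)) m (Xeps w b sg eps) = INR m) by (apply bsum; auto).
  destruct (Rlt_dec 0 (sg * kap)) as [Hp|Hp].
  - pose proof (SN_unique m _ _ _ _ _ _ _ _ _ Hs HSN (S1 ltac:(lra))) as E. injection E as -> -> ->. auto.
  - assert (sg * kap < 0).
    { destruct Hsg; subst; [|]; destruct (Rle_lt_or_eq_dec _ _ (Rnot_lt_le _ _ Hp)); try lra.
      all: exfalso; apply Hk; lra. }
    pose proof (SN_unique m _ _ _ _ _ _ _ _ _ Hs HSN (S2 H)) as E. injection E as -> -> ->. auto.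
Qed.

Lemma arrow_prop_of {A B C : pt} {m : nat} {w b : pt} {i1 j1 k1 i2 j2 k2 : nat} :
  (exists kap, kap <> 0 /\ forall sg, (sg = 1 \/ sg = -1) -> exists eps0, 0 < eps0 /\
    forall eps, 0 < eps < eps0 ->
      let X := Xeps w b sg eps in
      InT A B C m X /\ (sg * kap > 0 -> SN A B C m X i1 j1 k1) /\ (sg * kap < 0 -> SN A B C m X i2 j2 k2)) ->
  (exists kap, kap <> 0 /\ forall sg, (sg = 1 \/ sg = -1) -> exists eps0, 0 < eps0 /\
    forall eps, 0 < eps < eps0 ->
      InT A B C m (Xeps w b sg eps) /\ (sg * kap > 0 -> SN A B C m (Xeps w b sg eps) i1 j1 k1) /\
      (sg * kap < 0 -> SN A B C m (Xeps w b sg eps) i2 j2 k2)).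
Proof. intros H. exact H. Qed.

Lemma rep_internal n p a m sg e : SignHyp n p a sg -> (4 <= n)%nat -> (2 <= m)%nat -> (a < n)%nat ->
  RepCond n m e -> internal_vertex n p a m (rpos n p a m e).
Proof.
  intros HS Hn Hm Ha HR. destruct e as [t [[i j] k]]. pose proof HR as [H1 [H2 [Hs _]]]. simpl rpos.
  destruct (lat_SN n p a m sg t i j k HS Hn Hm H1 H2 Hs) as [I0 S0].
  assert (Hr : Cell n p a m (post n p a m t (INR i) (INR j) (INR k)) (post n p a m t (INR i) (INR j) (INR k)))
    by (apply (cell_of n p a m sg); auto).
  split. { apply (pt_region n p a m sg t _ i j k); auto. }
  intros [w [b [HB Hae]]].
  destruct (BA_char n p a m sg w b HS Hn Hm Ha HB) as
    [t' [H1' [H2' [[j' [k' [Hjk [-> ->]]]] | [[-> [i' [j' [Hij [-> ->]]]]] | [-> [i' [k' [Hik [-> ->]]]]]]]]]].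
  - pose proof (D_nz n p a sg t' HS H1' H2' ltac:(lia)) as D.
    pose proof (arrow_prop_of (arrowBC _ _ _ m j' k' D Hm Hjk)) as AP.
    destruct Hae as [Hae|Hae];
      [apply (arrow_contra n p a m sg t' _ _ _ (-1) 0 (S j') k' 0 j' (S k') HS Hn Hm Ha H1' H2' Hr ltac:(lra) AP)
      |apply (arrow_contra n p a m sg t' _ _ _ 1 0 (S j') k' 0 j' (S k') HS Hn Hm Ha H1' H2' Hr ltac:(lra) AP)];
      auto; apply (rep_not_bd n p a m sg t i j k); auto; lia.
  - pose proof (D_nz n p a sg 1 HS ltac:(lia) ltac:(lia) ltac:(lia)) as D.
    pose proof (arrow_prop_of (arrowAB _ _ _ m i' j' D Hm Hij)) as AP.
    destruct Hae as [Hae|Hae];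
      [apply (arrow_contra n p a m sg 1 _ _ _ (-1) (S i') j' 0 i' (S j') 0 HS Hn Hm Ha ltac:(lia) ltac:(lia) Hr ltac:(lra) AP)
      |apply (arrow_contra n p a m sg 1 _ _ _ 1 (S i') j' 0 i' (S j') 0 HS Hn Hm Ha ltac:(lia) ltac:(lia) Hr ltac:(lra) AP)];
      auto; apply (rep_not_bd n p a m sg t i j k); auto; lia.
  - pose proof (D_nz n p a sg (n-2) HS ltac:(lia) ltac:(lia) ltac:(lia)) as D.
    pose proof (arrow_prop_of (arrowAC _ _ _ m i' k' D Hm Hik)) as AP.
    destruct Hae as [Hae|Hae];
      [apply (arrow_contra n p a m sg (n-2) _ _ _ (-1) i' 0 (S k') (S i') 0 k' HS Hn Hm Ha ltac:(lia) ltac:(lia) Hr ltac:(lra) AP)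
      |apply (arrow_contra n p a m sg (n-2) _ _ _ 1 i' 0 (S k') (S i') 0 k' HS Hn Hm Ha ltac:(lia) ltac:(lia) Hr ltac:(lra) AP)];
      auto; apply (rep_not_bd n p a m sg t i j k); auto; lia.
Qed.

Lemma sign_pos kap : kap <> 0 -> exists sg, (sg = 1 \/ sg = -1) /\ sg * kap > 0.
Proof.
  intros Hk. destruct (Rlt_dec 0 kap) as [h|h].
  - exists 1. split; [left; auto | lra].
  - exists (-1). split; [right; auto|]. destruct (Rle_lt_or_eq_dec _ _ (Rnot_lt_le _ _ h)); [lra|]. subst. lra.
Qed.
Lemma sign_neg kap : kap <> 0 -> exists sg, (sg = 1 \/ sg = -1) /\ sg * kap < 0.
Proof.
  intros Hk. destruct (Rlt_dec 0 kap) as [h|h].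
  - exists (-1). split; [right; auto | lra].
  - exists 1. split; [left; auto|]. destruct (Rle_lt_or_eq_dec _ _ (Rnot_lt_le _ _ h)); [lra|]. subst. lra.
Qed.

Lemma coverage n p a m sg q : SignHyp n p a sg -> (4 <= n)%nat -> (2 <= m)%nat -> (a < n)%nat ->
  internal_vertex n p a m q -> exists e, RepCond n m e /\ conn n p a m q (rpos n p a m e).
Proof.
  intros HS Hn Hm Ha [Hreg Hni].
  assert (Hm1 : (1 <= m)%nat) by lia.
  destruct (cell_exists n p a m sg q HS Hn Hm Ha Hreg) as [t [i [j [k [H1 [H2 [Iq [Sq _]]]]]]]].
  assert (Hs : (i + j + k = m)%nat) by (destruct Sq; auto).
  pose proof (D_nz n p a sg t HS H1 H2 ltac:(lia)) as D.
  assert (Bd : forall w b sg', boundary_arrow n p a m w b -> (sg' = 1 \/ sg' = -1) ->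
             arrow_end n p a m sg' w b q -> False).
  { intros w b sg' HB Hsg' HA. apply Hni. exists w, b. split; auto.
    destruct Hsg'; subst; [right|left]; auto. }
  assert (Rep : forall t' i' j' k', RepCond n m (t', (i', j', k')) ->
            post n p a m t' (INR i') (INR j') (INR k') = post n p a m t (INR i) (INR j) (INR k) ->
            exists e, RepCond n m e /\ conn n p a m q (rpos n p a m e)).
  { intros t' i' j' k' HR E. exists (t', (i', j', k')). split; auto. simpl. rewrite E.
    destruct (lat_SN n p a m sg t i j k HS Hn Hm H1 H2 Hs) as [IA SA].
    apply (conn_in_tri n p a m sg t q _ i j k); auto. }
  destruct i as [|i0].
  - exfalso. destruct j as [|j0].
    + destruct k as [|k0]; [lia|].
      destruct (arrow_prop_of (arrowBC _ _ _ m 0 k0 D Hm ltac:(lia))) as [kap [Hk P]].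
      destruct (sign_neg kap Hk) as [sg' [Hsg' Hneg]].
      apply (Bd _ _ sg' (BA_BC n p a m sg t 0 k0 HS Hn Hm Ha H1 H2 ltac:(lia)) Hsg').
      apply (ae_intro n p a m sg t q _ _ sg' 0 0 (S k0)); auto.
      destruct (P sg' Hsg') as [e0 [He0 P0]]. exists e0. split; auto. intros eps Heps.
      destruct (P0 eps Heps) as [I1 [_ S2]]. split; [exact I1 | exact (S2 Hneg)].
    + destruct (arrow_prop_of (arrowBC _ _ _ m j0 k D Hm ltac:(lia))) as [kap [Hk P]].
      destruct (sign_pos kap Hk) as [sg' [Hsg' Hpos]].
      apply (Bd _ _ sg' (BA_BC n p a m sg t j0 k HS Hn Hm Ha H1 H2 ltac:(lia)) Hsg').
      apply (ae_intro n p a m sg t q _ _ sg' 0 (S j0) k); auto.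
      destruct (P sg' Hsg') as [e0 [He0 P0]]. exists e0. split; auto. intros eps Heps.
      destruct (P0 eps Heps) as [I1 [S1 _]]. split; [exact I1 | exact (S1 Hpos)].
  - destruct j as [|j0]; destruct k as [|k0].
    + exfalso. assert (Ei : S i0 = m) by lia.
      pose proof (D_nz n p a sg 1 HS ltac:(lia) ltac:(lia) ltac:(lia)) as D1.
      destruct (arrow_prop_of (arrowAB _ _ _ m (m - 1) 0 D1 Hm ltac:(lia))) as [kap [Hk P]].
      destruct (sign_pos kap Hk) as [sg' [Hsg' Hpos]].
      apply (Bd _ _ sg' (BA_AB1 n p a m sg 1 (m - 1) 0 HS Hn Hm Ha eq_refl ltac:(lia)) Hsg').
      rewrite Ei in Sq.
      apply (ae_intro_apex n p a m sg t q _ _ sg'); auto.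
      destruct (P sg' Hsg') as [e0 [He0 P0]]. exists e0. split; auto. intros eps Heps.
      destruct (P0 eps Heps) as [I1 [S1 _]]. split; [exact I1|].
      assert (Em : S (m - 1) = m) by lia. rewrite Em in S1. exact (S1 Hpos).
    + destruct (Nat.eq_dec t (n - 2)) as [Ht|Ht].
      * exfalso.
        destruct (arrow_prop_of (arrowAC _ _ _ m i0 (S k0) D Hm ltac:(lia))) as [kap [Hk P]].
        destruct (sign_neg kap Hk) as [sg' [Hsg' Hneg]].
        apply (Bd _ _ sg' (BA_ACn n p a m sg t i0 (S k0) HS Hn Hm Ha Ht ltac:(lia)) Hsg').
        apply (ae_intro n p a m sg t q _ _ sg' (S i0) 0 (S k0)); auto.
        destruct (P sg' Hsg') as [e0 [He0 P0]]. exists e0. split; auto. intros eps Heps.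
        destruct (P0 eps Heps) as [I1 [_ S2]]. split; [exact I1 | exact (S2 Hneg)].
      * apply (Rep t (S i0) 0%nat (S k0)); [unfold RepCond; lia | reflexivity].
    + destruct (Nat.eq_dec t 1) as [Ht|Ht].
      * exfalso.
        destruct (arrow_prop_of (arrowAB _ _ _ m i0 (S j0) D Hm ltac:(lia))) as [kap [Hk P]].
        destruct (sign_pos kap Hk) as [sg' [Hsg' Hpos]].
        apply (Bd _ _ sg' (BA_AB1 n p a m sg t i0 (S j0) HS Hn Hm Ha Ht ltac:(lia)) Hsg').
        apply (ae_intro n p a m sg t q _ _ sg' (S i0) (S j0) 0); auto.
        destruct (P sg' Hsg') as [e0 [He0 P0]]. exists e0. split; auto. intros eps Heps.
        destruct (P0 eps Heps) as [I1 [S1 _]]. split; [exact I1 | exact (S1 Hpos)].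
      * destruct t as [|t0]; [lia|].
        apply (Rep t0 (S i0) 0%nat (S j0)); [unfold RepCond; lia|].
        change (INR 0) with 0. apply post_side; auto.
    + apply (Rep t (S i0) (S j0) (S k0)); [unfold RepCond; lia | reflexivity].
Qed.

Theorem proposition4p2 (m n : nat) (p : nat -> pt) (a : nat) :
  (2 <= m)%nat -> (4 <= n)%nat -> convex_polygon n p -> (a < n)%nat ->
  num_internal_vertices n p a m (P2 (Z.of_nat n) (Z.of_nat m - 1)).
Proof.
  intros Hm Hn Hc Ha.
  destruct (conv_sign n p a Ha Hc) as [sg HS].
  change (SignHyp n p a sg) in HS.
  set (d0 := (0%nat, (0%nat, 0%nat, 0%nat))).
  exists (map (rpos n p a m) (lidx n m)).
  split; [|split; [|split]].
  - rewrite length_map. pose proof (lidx_len n m Hn Hm) as HL.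
    set (N := length (lidx n m)) in *.
    unfold P2.
    assert (E : ((Z.of_nat m - 1) * (Z.of_nat m - 1) * (Z.of_nat n - 2) + (Z.of_nat m - 1) * (Z.of_nat n - 4)
                 = Z.of_nat N * 2)%Z).
    { apply (f_equal Z.of_nat) in HL.
      rewrite Nat2Z.inj_mul, Nat2Z.inj_add, !Nat2Z.inj_mul, !Nat2Z.inj_sub in HL by lia.
      replace (Z.of_nat N * 2)%Z with (Z.of_nat 2 * Z.of_nat N)%Z by ring. rewrite HL.
      simpl (Z.of_nat 1). simpl (Z.of_nat 2). simpl (Z.of_nat 3). ring. }
    rewrite E, Z.div_mul by lia. reflexivity.
  - intros q Hq. apply in_map_iff in Hq. destruct Hq as [e [<- He]].
    apply lidx_in in He; auto. apply (rep_internal n p a m sg); auto.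
  - intros i j Hij Hj HC. rewrite length_map in Hj.
    assert (Hi : (i < length (lidx n m))%nat) by lia.
    rewrite (@nth_indep _ (map (rpos n p a m) (lidx n m)) i (0,0) (rpos n p a m d0)) in HC by (rewrite length_map; lia).
    rewrite (@nth_indep _ (map (rpos n p a m) (lidx n m)) j (0,0) (rpos n p a m d0)) in HC by (rewrite length_map; lia).
    rewrite !map_nth in HC.
    set (e1 := nth i (lidx n m) d0) in *. set (e2 := nth j (lidx n m) d0) in *.
    assert (R1 : RepCond n m e1) by (apply lidx_in; auto; apply nth_In; auto).
    assert (R2 : RepCond n m e2) by (apply lidx_in; auto; apply nth_In; auto).
    assert (C1 : forall e, RepCond n m e -> Cell n p a m (rpos n p a m e) (rpos n p a m e)).
    { intros [t [[i' j'] k']] HR. pose proof HR as [H1 [H2 [Hs _]]]. simpl rpos.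
      destruct (lat_SN n p a m sg t i' j' k' HS Hn Hm H1 H2 Hs) as [I0 S0].
      apply (cell_of n p a m sg); auto. }
    pose proof (conn_cell n p a m sg _ _ _ HS Hn Hm Ha HC (C1 e1 R1)) as HC2.
    assert (Eq : rpos n p a m e1 = rpos n p a m e2).
    { apply (cell_unique n p a m sg _ _ (rpos n p a m e2) HS Hn Hm Ha); auto.
      destruct (rep_internal n p a m sg e2 HS Hn Hm Ha R2) as [[Hp _] _]. auto. }
    apply (rep_distinct n p a m sg e1 e2 HS Hn Hm R1 R2) in Eq.
    pose proof (proj1 (NoDup_nth (lidx n m) d0) (lidx_nodup n m)) as ND.
    specialize (ND i j Hi Hj Eq). lia.
  - intros q Hq. destruct (coverage n p a m sg q HS Hn Hm Ha Hq) as [e [HR HCq]].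
    exists (rpos n p a m e). split; auto. apply in_map. apply lidx_in; auto.
Qed.
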